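(* Assume $f_1$ is $C^3$ and $f_2$ is $C^2$, that $\frac{D}{\gamma_2\lambda_Z(D)}>f_2'(\lambda_Z(D))$, and let $\mu_{c_2}>\mu_{c_1}(D,D)$ be a zero of $A$. Then there exist $\delta>0$ and $\rho>0$ such that for every $(D_1,D_2)$ with $D_1,D_2>0$ and $\|(D_1,D_2)-(D,D)\|<\rho$ the following hold for all $\mu\in[\mu_{c_2}-\delta,\mu_{c_2}+\delta]$ (all of which satisfy $\mu>\mu_{c_1}(D_1,D_2)$): (1) the Jacobian of $( * )$ at $E_2(\mu,D_1,D_2)$ has one negative real eigenvalue and a pair of nonreal complex conjugate eigenvalues $a(\mu)\pm i\omega(\mu)$, $\omega(\mu)\ne0$; (2) if, in addition, $f_1''(N(\mu_{c_2},D,D))<0$, then (after possibly shrinking $\delta$ and $\rho$) $a(\mu)$ is differentiable in $\mu$, $a'(\mu)>0$ on $[\mu_{c_2}-\delta,\mu_{c_2}+\delta]$, and there is $\mu^*=\mu^*(D_1,D_2)\in(\mu_{c_2}-\delta,\mu_{c_2}+\delta)$ with $a(\mu^* )=0$; in particular at $\mu^*$ the Jacobian has a pair of nonzero purely imaginary eigenvalues crossing the imaginary axis with $a'(\mu^* )>0$, while its third eigenvalue is negative.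
   Context: Let $D,\gamma_1,\gamma_2>0$ and $f_1,f_2:[0,\infty)\to[0,\infty)$ bounded, continuously differentiable, $f_i(0)=0$, $f_i'>0$, with $\lim f_1>d/\gamma_1$, $\lim f_2>d/\gamma_2$ for all $d$ in a neighborhood of $D$. The system $( * )$ is $N'=(\mu-N)D-Pf_1(N)$, $P'=\gamma_1Pf_1(N)-D_1P-Zf_2(P)$, $Z'=\gamma_2Zf_2(P)-D_2Z$ with $D_1,D_2>0$ and parameter $\mu>0$. $\lambda_P(d),\lambda_Z(d)$ are defined by $f_1(\lambda_P(d))=d/\gamma_1$, $f_2(\lambda_Z(d))=d/\gamma_2$; $\mu_{c_1}(D_1,D_2)=\lambda_P(D_1)+D_1\lambda_Z(D_2)/(D\gamma_1)$. For $\mu>\mu_{c_1}(D_1,D_2)$, $N(\mu,D_1,D_2)$ is the unique $N\in(0,\mu)$ with $(\mu-N)D-\lambda_Z(D_2)f_1(N)=0$, $Z(\mu,D_1,D_2)=(\gamma_2/D_2)\lambda_Z(D_2)(\gamma_1f_1(N)-D_1)$, and $E_2(\mu,D_1,D_2)=(N,\lambda_Z(D_2),Z)$ is the coexistence equilibrium. For $\mu>\mu_{c_1}(D,D)$, $A(\mu)=Z(\mu,D,D)\bigl(\frac{D}{\gamma_2\lambda_Z(D)}-f_2'(\lambda_Z(D))\bigr)-\lambda_Z(D)f_1'(N(\mu,D,D))$ (twice the real part of the complex eigenvalue pair of the Jacobian at $E_2(\mu,D,D)$). *)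

(* Defs.v *)
From Stdlib Require Import Reals ClassicalEpsilon.
Open Scope R_scope.

(* lambda(d) for f, gamma: the point x >= 0 with f x = d / gamma
   (unique when f is strictly increasing on [0,oo); default 0 otherwise). *)
Definition lam (f : R -> R) (g d : R) : R :=
  epsilon (inhabits 0) (fun x => 0 <= x /\ f x = d / g).

Definition mu_c1 (f1 f2 : R -> R) (g1 g2 D D1 D2 : R) : R :=
  lam f1 g1 D1 + D1 * lam f2 g2 D2 / (D * g1).

(* N(mu,D1,D2): the unique N in (0,mu) with (mu-N)D - lambda_Z(D2) f1(N) = 0
   (it does not depend on D1). *)
Definition Nstar (f1 f2 : R -> R) (g2 D mu D2 : R) : R :=
  epsilon (inhabits 0)
    (fun N => 0 < N < mu /\ (mu - N) * D - lam f2 g2 D2 * f1 N = 0).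

Definition Zstar (f1 f2 : R -> R) (g1 g2 D mu D1 D2 : R) : R :=
  (g2 / D2) * lam f2 g2 D2 * (g1 * f1 (Nstar f1 f2 g2 D mu D2) - D1).

(* Jacobian of the system ( * ) at the point (N,P,Z), entries indexed 0..2;
   f1', f2' are the derivatives of f1, f2. *)
Definition jac (f1 f1' f2 f2' : R -> R) (g1 g2 D D1 D2 N P Z : R)
  (i j : nat) : R :=
  match i, j with
  | 0%nat, 0%nat => - D - P * f1' N
  | 0%nat, 1%nat => - f1 N
  | 0%nat, 2%nat => 0
  | 1%nat, 0%nat => g1 * P * f1' N
  | 1%nat, 1%nat => g1 * f1 N - D1 - Z * f2' P
  | 1%nat, 2%nat => - f2 P
  | 2%nat, 0%nat => 0
  | 2%nat, 1%nat => g2 * Z * f2' P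
  | 2%nat, 2%nat => g2 * f2 P - D2
  | _, _ => 0
  end.

Definition jacE2 (f1 f1' f2 f2' : R -> R) (g1 g2 D mu D1 D2 : R) :
  nat -> nat -> R :=
  jac f1 f1' f2 f2' g1 g2 D D1 D2
      (Nstar f1 f2 g2 D mu D2) (lam f2 g2 D2) (Zstar f1 f2 g1 g2 D mu D1 D2).

Definition det3 (M : nat -> nat -> R) : R :=
  M 0%nat 0%nat * (M 1%nat 1%nat * M 2%nat 2%nat - M 1%nat 2%nat * M 2%nat 1%nat)
  - M 0%nat 1%nat * (M 1%nat 0%nat * M 2%nat 2%nat - M 1%nat 2%nat * M 2%nat 0%nat)
  + M 0%nat 2%nat * (M 1%nat 0%nat * M 2%nat 1%nat - M 1%nat 1%nat * M 2%nat 0%nat).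

Definition charpoly (J : nat -> nat -> R) (x : R) : R :=
  det3 (fun i j => (if Nat.eqb i j then x else 0) - J i j).

(* The eigenvalues of J (with multiplicity) are r, a + i w, a - i w:
   det(xI - J) = (x - r)((x - a)^2 + w^2) as polynomials. *)
Definition eig_split (J : nat -> nat -> R) (r a w : R) : Prop :=
  forall x, charpoly J x = (x - r) * ((x - a) ^ 2 + w ^ 2).

Definition Afun (f1 f1' f2 f2' : R -> R) (g1 g2 D mu : R) : R :=
  Zstar f1 f2 g1 g2 D mu D D * (D / (g2 * lam f2 g2 D) - f2' (lam f2 g2 D))
  - lam f2 g2 D * f1' (Nstar f1 f2 g2 D mu D).

Definition response_ok (f f' : R -> R) (g D : R) : Prop :=
  f 0 = 0 /\
  (forall x, 0 <= x -> 0 <= f x) /\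
  (exists B, forall x, 0 <= x -> f x <= B) /\
  (forall x, derivable_pt_lim f x (f' x)) /\ continuity f' /\
  (forall x, 0 <= x -> 0 < f' x) /\
  (exists L, (forall eps, 0 < eps -> exists M, forall x, M <= x -> Rabs (f x - L) < eps)
             /\ exists eta, 0 < eta /\ forall d, Rabs (d - D) < eta -> d / g < L).

(* Property (1) for fixed (D1,D2) on [mu_c2 - delta, mu_c2 + delta];
   r, a, w give the eigenvalues r, a(mu) +- i w(mu). *)
Definition prop1 (f1 f1' f2 f2' : R -> R) (g1 g2 D D1 D2 muc2 delta : R)
  (r a w : R -> R) : Prop :=
  forall mu, muc2 - delta <= mu <= muc2 + delta ->
    mu > mu_c1 f1 f2 g1 g2 D D1 D2 /\
    eig_split (jacE2 f1 f1' f2 f2' g1 g2 D mu D1 D2) (r mu) (a mu) (w mu) /\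
    r mu < 0 /\ w mu <> 0.

(* Main.v *)
Require Import Defs.
From Stdlib Require Import Reals Lra Psatz ClassicalEpsilon FunctionalExtensionality.
From Coquelicot Require Import Coquelicot.
Open Scope R_scope.

Lemma ballR (x e y : R) : ball x e y <-> Rabs (y - x) < e.
Proof. unfold ball; simpl; unfold AbsRing_ball, abs, minus, plus, opp; simpl. tauto. Qed.

Lemma ballP {U V : UniformSpace} (p : U) (q : V) e p' q' :
  ball (p,q) e (p',q') <-> ball p e p' /\ ball q e q'.
Proof. unfold ball at 1; simpl; unfold prod_ball; simpl. tauto. Qed.

Lemma ball3 (x y z e a b c : R) : ball ((x,y),z) e ((a,b),c) <->
  Rabs (a - x) < e /\ Rabs (b - y) < e /\ Rabs (c - z) < e.
Proof. rewrite !ballP, !ballR. tauto. Qed.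

Definition cont3 (F : R -> R -> R -> R) (x y z : R) : Prop :=
  continuous (fun p : R * R * R => F (fst (fst p)) (snd (fst p)) (snd p)) (x, y, z).

Lemma cont3_eps F x y z : cont3 F x y z <->
  forall eps, 0 < eps -> exists d, 0 < d /\ forall a b c,
    Rabs (a - x) < d -> Rabs (b - y) < d -> Rabs (c - z) < d ->
    Rabs (F a b c - F x y z) < eps.
Proof.
  unfold cont3, continuous. rewrite filterlim_locally. split.
  - intros H eps Heps. destruct (H (mkposreal eps Heps)) as [d Hd].
    exists d. split. apply cond_pos. intros a b c Ha Hb Hc.
    specialize (Hd ((a,b),c)). simpl in Hd. apply ballR. apply Hd. apply ball3. tauto.
  - intros H eps. destruct (H eps (cond_pos eps)) as [d [Hd0 Hd]].
    exists (mkposreal d Hd0). intros [[a b] c] Hb. apply ball3 in Hb. simpl in Hb.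
    apply ballR. simpl. apply Hd; tauto.
Qed.

Lemma cont3_const k x y z : cont3 (fun _ _ _ => k) x y z.
Proof. apply continuous_const. Qed.
Lemma cont3_p1 x y z : cont3 (fun a _ _ => a) x y z.
Proof. unfold cont3. apply (continuous_comp (fun p : R*R*R => fst p) (fun q : R*R => fst q)).
  apply continuous_fst. apply continuous_fst. Qed.
Lemma cont3_p2 x y z : cont3 (fun _ b _ => b) x y z.
Proof. unfold cont3. apply (continuous_comp (fun p : R*R*R => fst p) (fun q : R*R => snd q)).
  apply continuous_fst. apply continuous_snd. Qed.
Lemma cont3_p3 x y z : cont3 (fun _ _ c => c) x y z.
Proof. unfold cont3. apply continuous_snd. Qed.
Lemma cont3_plus F G x y z : cont3 F x y z -> cont3 G x y z -> cont3 (fun a b c => F a b c + G a b c) x y z.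
Proof. intros. apply (continuous_plus (fun p : R*R*R => F (fst (fst p)) (snd (fst p)) (snd p))
   (fun p : R*R*R => G (fst (fst p)) (snd (fst p)) (snd p))); assumption. Qed.
Lemma cont3_mult F G x y z : cont3 F x y z -> cont3 G x y z -> cont3 (fun a b c => F a b c * G a b c) x y z.
Proof. intros. apply (continuous_mult (fun p : R*R*R => F (fst (fst p)) (snd (fst p)) (snd p))
   (fun p : R*R*R => G (fst (fst p)) (snd (fst p)) (snd p))); assumption. Qed.
Lemma cont3_opp F x y z : cont3 F x y z -> cont3 (fun a b c => - F a b c) x y z.
Proof. intros. apply (continuous_opp (fun p : R*R*R => F (fst (fst p)) (snd (fst p)) (snd p))); assumption. Qed.
Lemma cont3_minus F G x y z : cont3 F x y z -> cont3 G x y z -> cont3 (fun a b c => F a b c - G a b c) x y z.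
Proof. intros. unfold Rminus. apply cont3_plus; auto. apply cont3_opp; auto. Qed.
Lemma cont3_comp1 (h : R -> R) F x y z : cont3 F x y z -> continuity_pt h (F x y z) ->
  cont3 (fun a b c => h (F a b c)) x y z.
Proof. intros H1 H2. unfold cont3. apply (continuous_comp (fun p : R*R*R => F (fst (fst p)) (snd (fst p)) (snd p)) h).
  exact H1. apply continuity_pt_filterlim. exact H2. Qed.
Lemma cont3_inv F x y z : cont3 F x y z -> F x y z <> 0 -> cont3 (fun a b c => / F a b c) x y z.
Proof. intros. apply (cont3_comp1 Rinv). auto. apply continuity_pt_filterlim. apply continuous_Rinv. auto. Qed.
Lemma cont3_div F G x y z : cont3 F x y z -> cont3 G x y z -> G x y z <> 0 -> cont3 (fun a b c => F a b c / G a b c) x y z.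
Proof. intros. unfold Rdiv. apply cont3_mult; auto. apply cont3_inv; auto. Qed.
Lemma cont3_pow F x y z n : cont3 F x y z -> cont3 (fun a b c => F a b c ^ n) x y z.
Proof. intros H. induction n; simpl. apply cont3_const. apply cont3_mult; auto. Qed.
Lemma cont3_ext F G x y z : (forall a b c, F a b c = G a b c) -> cont3 F x y z -> cont3 G x y z.
Proof. intros E H. replace G with F. auto. extensionality a. extensionality b. extensionality c. auto. Qed.

Lemma lim_cont f x l : derivable_pt_lim f x l -> continuity_pt f x.
Proof. intros H. apply derivable_continuous_pt. exists l. exact H. Qed.

Section CU.
Context {U : UniformSpace}.
Lemma cU_plus (f g : U -> R) x : continuous f x -> continuous g x -> continuous (fun y => f y + g y) x.
Proof. intros. apply (continuous_plus f g); auto. Qed.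
Lemma cU_mult (f g : U -> R) x : continuous f x -> continuous g x -> continuous (fun y => f y * g y) x.
Proof. intros. apply (continuous_mult f g); auto. Qed.
Lemma cU_opp (f : U -> R) x : continuous f x -> continuous (fun y => - f y) x.
Proof. intros. apply (continuous_opp f); auto. Qed.
Lemma cU_minus (f g : U -> R) x : continuous f x -> continuous g x -> continuous (fun y => f y - g y) x.
Proof. intros. unfold Rminus. apply cU_plus; auto. apply cU_opp; auto. Qed.
Lemma cU_pow (f : U -> R) x n : continuous f x -> continuous (fun y => f y ^ n) x.
Proof. intros. induction n; simpl. apply continuous_const. apply cU_mult; auto. Qed.
Lemma cU_const (k : R) (x : U) : continuous (fun _ => k) x.
Proof. apply continuous_const. Qed.
End CU.

Ltac cU := repeat match goal with
 | |- continuous (fun _ => _ + _) _ => apply cU_plus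
 | |- continuous (fun _ => _ - _) _ => apply cU_minus
 | |- continuous (fun _ => _ * _) _ => apply cU_mult
 | |- continuous (fun _ => - _) _ => apply cU_opp
 | |- continuous (fun _ => _ ^ _) _ => apply cU_pow
 | |- continuous (fun y => y) _ => apply continuous_id
 | |- continuous (Rmult ?k) _ => apply (cU_mult (fun _ => k) (fun y => y))
 | |- continuous (Rplus ?k) _ => apply (cU_plus (fun _ => k) (fun y => y))
 | |- continuous (Rminus ?k) _ => apply (cU_minus (fun _ => k) (fun y => y))
 | |- continuous Ropp _ => apply (cU_opp (fun y => y))
 | |- continuous (fun _ => ?k) _ => apply cU_const
 end.

Definition cub (c2 c1 c0 x : R) := x^3 + c2*x^2 + c1*x + c0.
Definition Qf (c2 c1 x y : R) := x^2 + x*y + y^2 + c2*(x+y) + c1.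
Definition disc (c2 c1 x : R) := 4*(c1 + x*(c2+x)) - (c2+x)^2.

Lemma cub_diff c2 c1 c0 x y : cub c2 c1 c0 y - cub c2 c1 c0 x = (y - x) * Qf c2 c1 x y.
Proof. unfold cub, Qf. ring. Qed.

Lemma cpt_of (f : R -> R) x : continuous f x -> continuity_pt f x.
Proof. intros. apply continuity_pt_filterlim. exact H. Qed.

Lemma cub_cont c2 c1 c0 : continuity (cub c2 c1 c0).
Proof. intro x. apply cpt_of. unfold cub.
  cU. Qed.

Lemma cont_eps {U : UniformSpace} (f : U -> R) x : continuous f x ->
  forall eps : posreal, locally x (fun y => Rabs (f y - f x) < eps).
Proof. intros H eps. unfold continuous in H.
  pose proof (proj1 (filterlim_locally f (f x)) H eps) as H1.
  eapply filter_imp; [|exact H1]. intros y Hy. apply ballR in Hy. exact Hy. Qed.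

Lemma locally_box {U : UniformSpace} (p0 : U) (P : U -> Prop) :
  locally p0 P -> exists e, 0 < e /\ forall p, ball p0 e p -> P p.
Proof. intros [e He]. exists e. split. apply cond_pos. auto. Qed.

Lemma GC {U : UniformSpace} (k2 k1 k0 : U -> R) (p0 : U) (r0 : R) :
  continuous k2 p0 -> continuous k1 p0 -> continuous k0 p0 ->
  cub (k2 p0) (k1 p0) (k0 p0) r0 = 0 -> 0 < Qf (k2 p0) (k1 p0) r0 r0 ->
  0 < disc (k2 p0) (k1 p0) r0 -> r0 < 0 ->
  exists eps kap, 0 < eps /\ 0 < kap /\ locally p0 (fun p =>
    (exists r, r0 - eps <= r <= r0 + eps /\ cub (k2 p) (k1 p) (k0 p) r = 0) /\
    (forall x y, r0 - eps <= x <= r0 + eps -> r0 - eps <= y <= r0 + eps ->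
        kap <= Qf (k2 p) (k1 p) x y) /\
    (forall x, r0 - eps <= x <= r0 + eps -> x < 0 /\ 0 < disc (k2 p) (k1 p) x)).
Proof.
  intros C2 C1 C0 Hr HQ Hd Hneg.
  set (Q0 := Qf (k2 p0) (k1 p0) r0 r0) in *.
  set (D0 := disc (k2 p0) (k1 p0) r0) in *.
  assert (CH : continuous (fun q : U * R * R => Qf (k2 (fst (fst q))) (k1 (fst (fst q))) (snd (fst q)) (snd q)) ((p0, r0), r0)).
  { unfold Qf. assert (E1 : continuous (fun q : U*R*R => snd (fst q)) ((p0,r0),r0)).
    { apply (continuous_comp (fun q : U*R*R => fst q) (fun q : U * R => snd q)). apply continuous_fst. apply continuous_snd. }
    assert (E2 : continuous (fun q : U*R*R => snd q) ((p0,r0),r0)). { apply continuous_snd. }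
    assert (E3 : continuous (fun q : U*R*R => k2 (fst (fst q))) ((p0,r0),r0)).
    { apply (continuous_comp (fun q : U*R*R => fst (fst q)) k2); auto.
      apply (continuous_comp (fun q : U*R*R => fst q) (fun q : U * R => fst q)). apply continuous_fst. apply continuous_fst. }
    assert (E4 : continuous (fun q : U*R*R => k1 (fst (fst q))) ((p0,r0),r0)).
    { apply (continuous_comp (fun q : U*R*R => fst (fst q)) k1); auto.
      apply (continuous_comp (fun q : U*R*R => fst q) (fun q : U * R => fst q)). apply continuous_fst. apply continuous_fst. }
    cU; auto. }
  assert (CD : continuous (fun q : U * R => disc (k2 (fst q)) (k1 (fst q)) (snd q)) (p0, r0)).
  { unfold disc. assert (E1 : continuous (fun q : U*R => snd q) (p0,r0)) by apply continuous_snd.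
    assert (E3 : continuous (fun q : U*R => k2 (fst q)) (p0,r0)).
    { apply (continuous_comp (fun q : U*R => fst q) k2); auto. apply continuous_fst. }
    assert (E4 : continuous (fun q : U*R => k1 (fst q)) (p0,r0)).
    { apply (continuous_comp (fun q : U*R => fst q) k1); auto. apply continuous_fst. }
    cU; auto. }
  destruct (cont_eps _ _ CH (mkposreal (Q0/2) ltac:(lra))) as [e1 He1].
  destruct (cont_eps _ _ CD (mkposreal D0 Hd)) as [e2 He2].
  simpl in He1, He2.
  set (eps := Rmin (Rmin (e1/2) (e2/2)) (- r0 / 2)).
  assert (Heps : 0 < eps).
  { unfold eps. pose proof (cond_pos e1). pose proof (cond_pos e2).
    repeat apply Rmin_glb_lt; lra. }
  assert (Hle1 : eps <= e1/2) by (unfold eps; eapply Rle_trans; [apply Rmin_l|apply Rmin_l]).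
  assert (Hle2 : eps <= e2/2) by (unfold eps; eapply Rle_trans; [apply Rmin_l|apply Rmin_r]).
  assert (Hle3 : eps <= - r0/2) by (unfold eps; apply Rmin_r).
  assert (QB : forall p x y, ball p0 e1 p -> r0 - eps <= x <= r0 + eps -> r0 - eps <= y <= r0 + eps ->
            Q0/2 <= Qf (k2 p) (k1 p) x y).
  { intros p x y Hp Hx Hy. specialize (He1 ((p,x),y)).
    assert (B : ball (p0, r0, r0) e1 (p, x, y)).
    { apply ballP. split. apply ballP. split. auto. apply ballR. apply Rabs_def1; lra.
      apply ballR. apply Rabs_def1; lra. }
    specialize (He1 B). simpl in He1. apply Rabs_def2 in He1. destruct He1. unfold Q0 in *. simpl in *. lra. }
  assert (DB : forall p x, ball p0 e2 p -> r0 - eps <= x <= r0 + eps -> 0 < disc (k2 p) (k1 p) x).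
  { intros p x Hp Hx. specialize (He2 (p,x)).
    assert (B : ball (p0, r0) e2 (p, x)).
    { apply ballP. split. auto. apply ballR. apply Rabs_def1; lra. }
    specialize (He2 B). simpl in He2. apply Rabs_def2 in He2. destruct He2. unfold D0 in *. simpl in *. lra. }
  assert (Sp : 0 < cub (k2 p0) (k1 p0) (k0 p0) (r0 + eps)).
  { pose proof (cub_diff (k2 p0) (k1 p0) (k0 p0) r0 (r0+eps)).
    assert (Q0/2 <= Qf (k2 p0) (k1 p0) r0 (r0 + eps)) by (apply QB; [apply ball_center|lra|lra]).
    assert (0 < (r0 + eps - r0) * Qf (k2 p0) (k1 p0) r0 (r0 + eps)) by (apply Rmult_lt_0_compat; lra).
    lra. }
  assert (Sm : cub (k2 p0) (k1 p0) (k0 p0) (r0 - eps) < 0).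
  { pose proof (cub_diff (k2 p0) (k1 p0) (k0 p0) (r0 - eps) r0).
    assert (Q0/2 <= Qf (k2 p0) (k1 p0) (r0 - eps) r0) by (apply QB; [apply ball_center|lra|lra]).
    assert (0 < (r0 - (r0 - eps)) * Qf (k2 p0) (k1 p0) (r0 - eps) r0) by (apply Rmult_lt_0_compat; lra).
    lra. }
  assert (Cp : forall t, continuous (fun p => cub (k2 p) (k1 p) (k0 p) t) p0).
  { intro t. unfold cub. cU; auto. }
  destruct (cont_eps _ _ (Cp (r0 + eps)) (mkposreal _ Sp)) as [e3 He3].
  assert (Sm' : 0 < - cub (k2 p0) (k1 p0) (k0 p0) (r0 - eps)) by lra.
  destruct (cont_eps _ _ (Cp (r0 - eps)) (mkposreal _ Sm')) as [e4 He4]. simpl in He3, He4.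
  exists eps, (Q0/2). split. auto. split. lra.
  exists (mkposreal _ (Rmin_pos _ _ (Rmin_pos _ _ (cond_pos e1) (cond_pos e2)) (Rmin_pos _ _ (cond_pos e3) (cond_pos e4)))).
  intros p Hp. simpl in Hp.
  assert (B1 : ball p0 e1 p). { eapply ball_le; [|exact Hp]. eapply Rle_trans; apply Rmin_l. }
  assert (B2 : ball p0 e2 p). { eapply ball_le; [|exact Hp]. eapply Rle_trans; [apply Rmin_l|apply Rmin_r]. }
  assert (B3 : ball p0 e3 p). { eapply ball_le; [|exact Hp]. eapply Rle_trans; [apply Rmin_r|apply Rmin_l]. }
  assert (B4 : ball p0 e4 p). { eapply ball_le; [|exact Hp]. eapply Rle_trans; [apply Rmin_r|apply Rmin_r]. }
  specialize (He3 p B3). specialize (He4 p B4).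
  apply Rabs_def2 in He3. apply Rabs_def2 in He4.
  split; [|split].
  - destruct (IVT_cor (cub (k2 p) (k1 p) (k0 p)) (r0 - eps) (r0 + eps)) as [r [Hr1 Hr2]].
    apply cub_cont. lra.
    assert (cub (k2 p) (k1 p) (k0 p) (r0 - eps) < 0) by lra.
    assert (0 < cub (k2 p) (k1 p) (k0 p) (r0 + eps)) by lra. nra.
    exists r. auto.
  - intros x y Hx Hy. apply QB; auto.
  - intros x Hx. split. lra. apply DB; auto.
Qed.

Lemma cpt_ext (f : R -> R) c x : continuity_pt f x -> continuity_pt (fun y => f y - c) x.
Proof. intros H. apply cpt_of. apply cU_minus. apply continuity_pt_filterlim. exact H. apply cU_const. Qed.

Section RO.
Variables (f f' : R -> R) (g D0 : R).
Hypothesis Hro : response_ok f f' g D0.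
Hypothesis Hg : 0 < g.

Lemma ro_der x : derivable_pt_lim f x (f' x).
Proof. destruct Hro as [_ [_ [_ [H _]]]]. auto. Qed.
Lemma ro_pos x : 0 <= x -> 0 < f' x.
Proof. destruct Hro as [_ [_ [_ [_ [_ [H _]]]]]]. auto. Qed.
Lemma ro_0 : f 0 = 0.
Proof. destruct Hro as [H _]. auto. Qed.
Lemma ro_cpt x : continuity_pt f x.
Proof. apply (lim_cont _ _ _ (ro_der x)). Qed.
Lemma ro_cpt' x : continuity_pt f' x.
Proof. destruct Hro as [_ [_ [_ [_ [H _]]]]]. apply H. Qed.

Lemma ro_incr x y : 0 <= x -> x < y -> f x < f y.
Proof. intros Hx Hxy. destruct (MVT_cor2 f f' x y Hxy) as [c [Hc1 Hc2]].
  intros; apply ro_der. pose proof (ro_pos c ltac:(lra)).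
  assert (0 < f' c * (y - x)) by (apply Rmult_lt_0_compat; lra). lra. Qed.

Lemma ro_le x y : 0 <= x -> x <= y -> f x <= f y.
Proof. intros. destruct (Req_dec x y). subst; lra. left; apply ro_incr; lra. Qed.

Lemma ro_inj x y : 0 <= x -> 0 <= y -> f x = f y -> x = y.
Proof. intros. destruct (Rtotal_order x y) as [H2|[H2|H2]]; auto.
  pose proof (ro_incr x y); lra. pose proof (ro_incr y x); lra. Qed.

Lemma ro_nonneg x : 0 <= x -> 0 <= f x.
Proof. intros. rewrite <- ro_0. apply ro_le; lra. Qed.

Lemma ro_adm : exists eta, 0 < eta /\ forall d, 0 < d -> Rabs (d - D0) < eta ->
   0 < lam f g d /\ f (lam f g d) = d / g.
Proof.
  destruct Hro as [H0 [_ [_ [_ [_ [_ [L [HL [eta [Heta Hlt]]]]]]]]]].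
  exists eta. split. auto. intros d Hd Hdd. specialize (Hlt d Hdd).
  assert (Hdg : 0 < d / g) by (apply Rdiv_lt_0_compat; lra).
  destruct (HL (L - d/g) ltac:(lra)) as [M HM].
  set (X := Rmax M 1).
  assert (HX : 0 <= X) by (unfold X; pose proof (Rmax_r M 1); lra).
  assert (HfX : d / g < f X).
  { specialize (HM X (Rmax_l M 1)). apply Rabs_def2 in HM. lra. }
  destruct (IVT_cor (fun x => f x - d/g) 0 X) as [z [Hz1 Hz2]].
  intro x. apply cpt_ext. apply ro_cpt. auto.
  rewrite H0. assert (0 < f X - d/g) by lra. nra.
  assert (Hex : exists x, 0 <= x /\ f x = d / g) by (exists z; split; lra).
  pose proof (epsilon_spec (inhabits 0) _ Hex) as [Hl1 Hl2]. fold (lam f g d) in Hl1, Hl2.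
  split; auto. destruct Hl1; auto. rewrite <- H in Hl2. lra.
Qed.

Lemma lam_cont eta (Hadm : forall d, 0 < d -> Rabs (d - D0) < eta ->
   0 < lam f g d /\ f (lam f g d) = d / g) d1 :
  0 < d1 -> Rabs (d1 - D0) < eta -> continuity_pt (lam f g) d1.
Proof.
  intros Hd1 Hdd1. destruct (Hadm d1 Hd1 Hdd1) as [Hx1 Hfx1].
  set (x1 := lam f g d1) in *.
  unfold continuity_pt, continue_in, limit1_in, limit_in. simpl. unfold R_dist.
  intros eps Heps.
  set (e := Rmin (eps/2) (x1/2)).
  assert (He : 0 < e) by (unfold e; apply Rmin_pos; lra).
  assert (He1 : e <= eps/2) by apply Rmin_l. assert (He2 : e <= x1/2) by apply Rmin_r.
  assert (Hlo : f (x1 - e) < d1 / g) by (rewrite <- Hfx1; apply ro_incr; lra).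
  assert (Hhi : d1 / g < f (x1 + e)) by (rewrite <- Hfx1; apply ro_incr; lra).
  set (al := Rmin (Rmin (eta - Rabs (d1 - D0)) d1) (Rmin (g * (d1/g - f (x1 - e))) (g * (f (x1 + e) - d1/g)))).
  assert (Hal : 0 < al).
  { unfold al. repeat apply Rmin_pos; try lra; apply Rmult_lt_0_compat; lra. }
  exists al. split. auto. intros d [_ Hd].
  assert (A1 : al <= eta - Rabs (d1 - D0)) by (unfold al; eapply Rle_trans; apply Rmin_l).
  assert (A2 : al <= d1) by (unfold al; eapply Rle_trans; [apply Rmin_l|apply Rmin_r]).
  assert (A3 : al <= g * (d1/g - f (x1 - e))) by (unfold al; eapply Rle_trans; [apply Rmin_r|apply Rmin_l]).
  assert (A4 : al <= g * (f (x1 + e) - d1/g)) by (unfold al; eapply Rle_trans; [apply Rmin_r|apply Rmin_r]).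
  apply Rabs_def2 in Hd. destruct Hd as [Hd Hd'].
  assert (Hdpos : 0 < d) by lra.
  assert (Hdd : Rabs (d - D0) < eta).
  { pose proof (Rabs_triang (d - d1) (d1 - D0)). replace (d - d1 + (d1 - D0)) with (d - D0) in H by ring.
    assert (Rabs (d - d1) < al) by (apply Rabs_def1; lra). lra. }
  destruct (Hadm d Hdpos Hdd) as [Hy Hfy].
  assert (Q1 : f (x1 - e) < d / g).
  { assert (d1/g - d/g = (d1 - d)/g) by (field; lra).
    assert ((d1 - d) / g < d1/g - f (x1 - e)).
    { apply Rmult_lt_reg_l with g. auto. replace (g * ((d1 - d)/g)) with (d1 - d) by (field; lra). lra. }
    lra. }
  assert (Q2 : d / g < f (x1 + e)).
  { assert (d/g - d1/g = (d - d1)/g) by (field; lra).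
    assert ((d - d1) / g < f (x1 + e) - d1/g).
    { apply Rmult_lt_reg_l with g. auto. replace (g * ((d - d1)/g)) with (d - d1) by (field; lra). lra. }
    lra. }
  assert (lam f g d > x1 - e).
  { destruct (Rle_lt_dec (lam f g d) (x1 - e)); auto. pose proof (ro_le (lam f g d) (x1 - e)). lra. }
  assert (lam f g d < x1 + e).
  { destruct (Rle_lt_dec (x1 + e) (lam f g d)); auto. pose proof (ro_le (x1 + e) (lam f g d)). lra. }
  unfold x1 in *. apply Rabs_def1; lra.
Qed.
End RO.

Lemma cpt_eps (f : R -> R) x : continuity_pt f x ->
  forall eps, 0 < eps -> exists d, 0 < d /\ forall y, Rabs (y - x) < d -> Rabs (f y - f x) < eps.
Proof.
  intros H eps Heps. destruct (H eps Heps) as [al [Hal Hf]]. exists al. split. auto.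
  intros y Hy. destruct (Req_dec y x). subst. rewrite Rminus_diag, Rabs_R0. auto.
  apply (Hf y). split. split. constructor. auto. auto.
Qed.

Lemma quot_bound (a q Gt Q0 eps : R) : 0 < eps -> Q0 <> 0 ->
  Rabs (q - Q0) < Rabs Q0 / 2 ->
  Rabs (q - Q0) < eps * (Rabs Q0 * Rabs Q0) / (4 * (Rabs Gt + 1)) ->
  Rabs (a - Gt) < eps * Rabs Q0 / 4 ->
  Rabs (- a / q - - Gt / Q0) < eps.
Proof.
  intros He HQ H1 H2 H3.
  assert (HB : 0 < Rabs Q0) by (apply Rabs_pos_lt; auto).
  assert (Hq : Rabs Q0 / 2 < Rabs q).
  { pose proof (Rabs_triang_inv Q0 q). rewrite Rabs_minus_sym in H1. lra. }
  assert (Hq0 : q <> 0). { intro E. rewrite E, Rabs_R0 in Hq. lra. }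
  replace (- a / q - - Gt / Q0) with ((Gt * (q - Q0) + (Gt - a) * Q0) / (q * Q0)) by (field; auto).
  unfold Rdiv at 1. rewrite Rabs_mult, Rabs_inv.
  rewrite Rabs_mult.
  apply Rmult_lt_reg_r with (Rabs q * Rabs Q0). apply Rmult_lt_0_compat; lra.
  unfold Rdiv. rewrite Rmult_assoc, Rinv_l, Rmult_1_r by (apply Rgt_not_eq; apply Rmult_lt_0_compat; lra).
  pose proof (Rabs_triang (Gt * (q - Q0)) ((Gt - a) * Q0)).
  rewrite !Rabs_mult in H.
  rewrite Rabs_minus_sym in H3.
  assert (HA : 0 <= Rabs Gt) by apply Rabs_pos.
  assert (Rabs Gt * Rabs (q - Q0) <= eps * (Rabs Q0 * Rabs Q0) / 4).
  { assert (Rabs Gt * Rabs (q - Q0) <= (Rabs Gt + 1) * (eps * (Rabs Q0 * Rabs Q0) / (4 * (Rabs Gt + 1)))).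
    { apply Rmult_le_compat. auto. apply Rabs_pos. lra. lra. }
    replace ((Rabs Gt + 1) * (eps * (Rabs Q0 * Rabs Q0) / (4 * (Rabs Gt + 1)))) with (eps * (Rabs Q0 * Rabs Q0) / 4) in H0 by (field; lra).
    auto. }
  assert (Rabs (Gt - a) * Rabs Q0 < eps * Rabs Q0 / 4 * Rabs Q0) by (apply Rmult_lt_compat_r; auto).
  assert (eps * (Rabs Q0 * Rabs Q0) / 2 < eps * (Rabs q * Rabs Q0)).
  { assert (Rabs Q0 * Rabs Q0 / 2 < Rabs q * Rabs Q0) by nra. nra. }
  nra.
Qed.

Lemma ID (phi : R -> R) (t0 : R) (G : R -> R -> R) (Q : R -> R -> R -> R) (Gt Q0 : R) :
  (exists d0, 0 < d0 /\ forall t, Rabs (t - t0) < d0 -> G t (phi t) = 0) ->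
  (forall t y y', G t y - G t y' = (y - y') * Q t y y') ->
  derivable_pt_lim (fun t => G t (phi t0)) t0 Gt ->
  (forall eps, 0 < eps -> exists d, 0 < d /\ forall t, Rabs (t - t0) < d ->
       Rabs (Q t (phi t) (phi t0) - Q0) < eps) ->
  Q0 <> 0 ->
  derivable_pt_lim phi t0 (- Gt / Q0).
Proof.
  intros [d0 [Hd0 HG]] HQ HGt HQc HQ0 eps Heps.
  assert (HB : 0 < Rabs Q0) by (apply Rabs_pos_lt; auto).
  assert (HA : 0 <= Rabs Gt) by apply Rabs_pos.
  destruct (HQc (Rmin (Rabs Q0 / 2) (eps * (Rabs Q0 * Rabs Q0) / (4 * (Rabs Gt + 1)))))
    as [d1 [Hd1 Hq]].
  { apply Rmin_pos. lra. apply Rdiv_lt_0_compat. apply Rmult_lt_0_compat; nra. lra. }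
  destruct (HGt (eps * Rabs Q0 / 4)) as [d2 Hd2]. apply Rdiv_lt_0_compat. nra. lra.
  assert (Hdp : 0 < Rmin d0 (Rmin d1 d2)) by (repeat apply Rmin_pos; auto; apply cond_pos).
  exists (mkposreal _ Hdp). intros h Hh0 Hh. simpl in Hh.
  assert (Hh1 : Rabs h < d0) by (eapply Rlt_le_trans; [exact Hh|apply Rmin_l]).
  assert (Hh2 : Rabs h < d1) by (eapply Rlt_le_trans; [exact Hh|eapply Rle_trans; [apply Rmin_r|apply Rmin_l]]).
  assert (Hh3 : Rabs h < d2) by (eapply Rlt_le_trans; [exact Hh|eapply Rle_trans; [apply Rmin_r|apply Rmin_r]]).
  assert (E1 : G (t0 + h) (phi (t0 + h)) = 0) by (apply HG; replace (t0 + h - t0) with h by ring; auto).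
  assert (E0 : G t0 (phi t0) = 0) by (apply HG; rewrite Rminus_diag, Rabs_R0; auto).
  specialize (Hd2 h Hh0 Hh3). simpl in Hd2.
  specialize (Hq (t0 + h) ltac:(replace (t0 + h - t0) with h by ring; auto)).
  set (q := Q (t0 + h) (phi (t0 + h)) (phi t0)) in *.
  set (a := (G (t0 + h) (phi t0) - G t0 (phi t0)) / h) in *.
  assert (Hq1 : Rabs (q - Q0) < Rabs Q0 / 2) by (eapply Rlt_le_trans; [exact Hq|apply Rmin_l]).
  assert (Hq2 : Rabs (q - Q0) < eps * (Rabs Q0 * Rabs Q0) / (4 * (Rabs Gt + 1))) by (eapply Rlt_le_trans; [exact Hq|apply Rmin_r]).
  assert (Hqn : q <> 0).
  { intro E. rewrite E in Hq1. rewrite Rminus_0_l, Rabs_Ropp in Hq1. lra. }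
  pose proof (HQ (t0 + h) (phi (t0 + h)) (phi t0)) as HQh. fold q in HQh.
  rewrite E1 in HQh.
  assert (Ea : a * h = G (t0 + h) (phi t0)) by (unfold a; rewrite E0; field; auto).
  assert (Ephi : phi (t0+h) - phi t0 = - (a*h) / q).
  { rewrite Ea. apply (Rmult_eq_reg_r q); [|auto]. rewrite <- HQh. field. auto. }
  replace ((phi (t0 + h) - phi t0) / h) with (- a / q) by (rewrite Ephi; field; split; auto).
  apply quot_bound; auto.
Qed.

Lemma Derive_of (f : R -> R) x l : is_derive f x l -> Derive (fun y => f y) x = l.
Proof. intros. apply is_derive_unique. auto. Qed.

Lemma cub_der (k2 k1 k0 : R -> R) x l2 l1 l0 y :
  derivable_pt_lim k2 x l2 -> derivable_pt_lim k1 x l1 -> derivable_pt_lim k0 x l0 ->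
  derivable_pt_lim (fun t => cub (k2 t) (k1 t) (k0 t) y) x (l2 * y^2 + l1 * y + l0).
Proof. intros H2 H1 H0. apply is_derive_Reals in H2. apply is_derive_Reals in H1. apply is_derive_Reals in H0.
  apply is_derive_Reals. unfold cub. auto_derive. repeat split; eexists; eassumption.
  rewrite (Derive_of _ _ _ H2), (Derive_of _ _ _ H1), (Derive_of _ _ _ H0). ring. Qed.

Ltac c3 := repeat match goal with
 | |- cont3 (fun _ _ _ => _ + _) _ _ _ => apply cont3_plus
 | |- cont3 (fun _ _ _ => _ - _) _ _ _ => apply cont3_minus
 | |- cont3 (fun _ _ _ => _ * _) _ _ _ => apply cont3_mult
 | |- cont3 (fun _ _ _ => _ / _) _ _ _ => apply cont3_div
 | |- cont3 (fun _ _ _ => - _) _ _ _ => apply cont3_opp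
 | |- cont3 (fun _ _ _ => _ ^ _) _ _ _ => apply cont3_pow
 | |- cont3 (fun a _ _ => a) _ _ _ => apply cont3_p1
 | |- cont3 (fun _ b _ => b) _ _ _ => apply cont3_p2
 | |- cont3 (fun _ _ c => c) _ _ _ => apply cont3_p3
 | |- cont3 (fun _ _ _ => ?k) _ _ _ => apply cont3_const
 end.

Lemma sqrt_bound x y rho : sqrt (x^2 + y^2) < rho -> Rabs x < rho /\ Rabs y < rho.
Proof.
  intros H. rewrite <- !sqrt_Rsqr_abs. unfold Rsqr.
  split; eapply Rle_lt_trans; try exact H; apply sqrt_le_1_alt; nra.
Qed.

Lemma cub_factor c2 c1 c0 r x : cub c2 c1 c0 r = 0 -> 0 <= disc c2 c1 r ->
  cub c2 c1 c0 x = (x - r) * ((x - (- (c2 + r) / 2))^2 + (sqrt (disc c2 c1 r / 4))^2).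
Proof.
  intros Hr Hd. rewrite pow2_sqrt by lra.
  replace (cub c2 c1 c0 x) with (cub c2 c1 c0 x - cub c2 c1 c0 r) by lra.
  rewrite cub_diff. unfold Qf, disc. field.
Qed.

Lemma cpt_of_eps (f : R -> R) x :
  (forall eps, 0 < eps -> exists d, 0 < d /\ forall y, Rabs (y - x) < d -> Rabs (f y - f x) < eps) ->
  continuity_pt f x.
Proof.
  intros H eps Heps. destruct (H eps Heps) as [d [Hd Hf]]. exists d. split. auto.
  intros y [_ Hy]. apply Hf. exact Hy.
Qed.

Definition clamp lo hi t := Rmax lo (Rmin hi t).

Lemma clamp_lip lo hi s t : lo <= hi -> Rabs (clamp lo hi s - clamp lo hi t) <= Rabs (s - t).
Proof.
  intros. unfold clamp, Rmax, Rmin.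
  repeat destruct Rle_dec; unfold Rabs; repeat destruct Rcase_abs; lra.
Qed.

Lemma clamp_cont lo hi t : lo <= hi -> continuity_pt (clamp lo hi) t.
Proof.
  intros H. apply cpt_of_eps. intros eps Heps. exists eps. split. auto. intros y Hy.
  eapply Rle_lt_trans. apply clamp_lip; auto. auto.
Qed.

Lemma clamp_in lo hi t : lo <= hi -> lo <= clamp lo hi t <= hi.
Proof. intros. unfold clamp, Rmax, Rmin. repeat destruct Rle_dec; lra. Qed.

Lemma clamp_id lo hi t : lo <= t <= hi -> clamp lo hi t = t.
Proof. intros. unfold clamp, Rmax, Rmin. repeat destruct Rle_dec; lra. Qed.

Section Model.
Variables (D g1 g2 : R) (f1 f1' f1'' f2 f2' : R -> R).
Hypotheses (HD : 0 < D) (Hg1 : 0 < g1) (Hg2 : 0 < g2)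
  (Hf1 : response_ok f1 f1' g1 D) (Hf2 : response_ok f2 f2' g2 D)
  (Hf1d : forall x, derivable_pt_lim f1' x (f1'' x)) (Hf1c : continuity f1'').
Variable eta2 : R.
Hypothesis Heta2 : 0 < eta2.
Hypothesis Hadm2 : forall d, 0 < d -> Rabs (d - D) < eta2 -> 0 < lam f2 g2 d /\ f2 (lam f2 g2 d) = d / g2.

Definition lZ d := lam f2 g2 d.
Definition Nf mu d2 := Nstar f1 f2 g2 D mu d2.
Definition Gn mu l n := (mu - n) * D - l * f1 n.

Lemma Gn_decr mu l a b : 0 < l -> 0 <= a -> a < b -> Gn mu l b < Gn mu l a.
Proof. intros. unfold Gn. pose proof (ro_incr f1 f1' g1 D Hf1 a b H0 H1). nra. Qed.
Lemma Gn_decr' mu l a b : 0 < l -> 0 <= a -> a <= b -> Gn mu l b <= Gn mu l a.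
Proof. intros. destruct (Req_dec a b). subst; lra. left; apply Gn_decr; lra. Qed.

Lemma N_spec mu d2 : 0 < mu -> 0 < lZ d2 -> 0 < Nf mu d2 < mu /\ Gn mu (lZ d2) (Nf mu d2) = 0.
Proof.
  intros Hmu Hl.
  assert (Hex : exists n, 0 < n < mu /\ (mu - n) * D - lam f2 g2 d2 * f1 n = 0).
  { destruct (IVT_cor (fun n => Gn mu (lZ d2) n) 0 mu) as [z [Hz1 Hz2]].
    - intro x. apply cpt_of. unfold Gn. cU.
      apply continuity_pt_filterlim. apply (ro_cpt f1 f1' g1 D Hf1).
    - lra.
    - unfold Gn. rewrite (ro_0 f1 f1' g1 D Hf1).
      pose proof (ro_incr f1 f1' g1 D Hf1 0 mu ltac:(lra) Hmu). rewrite (ro_0 f1 f1' g1 D Hf1) in H.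
      assert (0 < lZ d2 * f1 mu) by (apply Rmult_lt_0_compat; lra).
      assert (0 < (mu - 0) * D - lZ d2 * 0) by nra. nra.
    - exists z. unfold Gn, lZ in Hz2. split; auto.
      destruct Hz1 as [[Hz1|Hz1] [Hz3|Hz3]]; try (split; lra).
      + subst. rewrite Rminus_diag in Hz2.
        pose proof (ro_incr f1 f1' g1 D Hf1 0 mu ltac:(lra) Hmu). rewrite (ro_0 f1 f1' g1 D Hf1) in H.
        unfold lZ in Hl. nra.
      + subst. rewrite (ro_0 f1 f1' g1 D Hf1) in Hz2. nra. }
  pose proof (epsilon_spec (inhabits 0) _ Hex) as H. fold (Nstar f1 f2 g2 D mu d2) in H.
  exact H.
Qed.

Lemma N_uniq mu l n n' : 0 < l -> 0 <= n -> 0 <= n' -> Gn mu l n = 0 -> Gn mu l n' = 0 -> n = n'.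
Proof. intros. destruct (Rtotal_order n n') as [H4|[H4|H4]]; auto.
  pose proof (Gn_decr mu l n n'); lra. pose proof (Gn_decr mu l n' n); lra. Qed.

Lemma lZ_cont d : 0 < d -> Rabs (d - D) < eta2 -> continuity_pt lZ d.
Proof. intros. apply (lam_cont f2 f2' g2 D Hf2 Hg2 eta2 Hadm2 d); auto. Qed.

Lemma N_cont mu1 d21 y : 0 < mu1 -> 0 < d21 -> Rabs (d21 - D) < eta2 ->
  cont3 (fun mu _ d2 => Nf mu d2) mu1 y d21.
Proof.
  intros Hmu1 Hd21 Ha21. apply cont3_eps. intros eps Heps.
  destruct (Hadm2 d21 Hd21 Ha21) as [Hl1 _]. fold (lZ d21) in Hl1.
  destruct (N_spec mu1 d21 Hmu1 Hl1) as [Hn1 HG1].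
  set (n1 := Nf mu1 d21) in *. set (l1 := lZ d21) in *.
  set (e := Rmin (eps/2) (n1/2)).
  assert (He : 0 < e) by (unfold e; apply Rmin_pos; lra).
  assert (He1 : e <= eps/2) by apply Rmin_l. assert (He2 : e <= n1/2) by apply Rmin_r.
  assert (Gp : 0 < Gn mu1 l1 (n1 - e)) by (rewrite <- HG1; apply Gn_decr; lra).
  assert (Gm : Gn mu1 l1 (n1 + e) < 0) by (rewrite <- HG1; apply Gn_decr; lra).
  set (m := Rmin (Gn mu1 l1 (n1 - e)) (- Gn mu1 l1 (n1 + e))).
  assert (Hm : 0 < m) by (unfold m; apply Rmin_pos; lra).
  assert (Hm1 : m <= Gn mu1 l1 (n1 - e)) by apply Rmin_l.
  assert (Hm2 : m <= - Gn mu1 l1 (n1 + e)) by apply Rmin_r.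
  set (F := f1 (n1 + e)).
  assert (HF : 0 < F).
  { unfold F. pose proof (ro_incr f1 f1' g1 D Hf1 0 (n1+e) ltac:(lra) ltac:(lra)).
    rewrite (ro_0 f1 f1' g1 D Hf1) in H. lra. }
  destruct (cpt_eps lZ d21 (lZ_cont d21 Hd21 Ha21) (m / (4 * F)) ltac:(apply Rdiv_lt_0_compat; lra))
    as [da [Hda Hla]].
  set (dd := Rmin (Rmin (mu1/2) (m/(4*D))) (Rmin da (Rmin d21 (eta2 - Rabs (d21 - D))))).
  assert (Hdd : 0 < dd).
  { unfold dd. repeat apply Rmin_pos; try lra. apply Rdiv_lt_0_compat; lra. }
  assert (B1 : dd <= mu1/2) by (unfold dd; eapply Rle_trans; apply Rmin_l).
  assert (B2 : dd <= m/(4*D)) by (unfold dd; eapply Rle_trans; [apply Rmin_l|apply Rmin_r]).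
  assert (B3 : dd <= da) by (unfold dd; eapply Rle_trans; [apply Rmin_r|apply Rmin_l]).
  assert (B4 : dd <= d21) by (unfold dd; eapply Rle_trans; [apply Rmin_r|eapply Rle_trans; [apply Rmin_r|apply Rmin_l]]).
  assert (B5 : dd <= eta2 - Rabs (d21 - D)) by (unfold dd; eapply Rle_trans; [apply Rmin_r|eapply Rle_trans; [apply Rmin_r|apply Rmin_r]]).
  exists dd. split. auto. intros a b c Ha _ Hc.
  apply Rabs_def2 in Ha. apply Rabs_def2 in Hc.
  assert (Hc0 : 0 < c) by lra.
  assert (Hca : Rabs (c - D) < eta2).
  { pose proof (Rabs_triang (c - d21) (d21 - D)). replace (c - d21 + (d21 - D)) with (c - D) in H by ring.
    assert (Rabs (c - d21) < dd) by (apply Rabs_def1; lra). lra. }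
  destruct (Hadm2 c Hc0 Hca) as [Hlc _]. fold (lZ c) in Hlc.
  assert (Ha0 : 0 < a) by lra.
  destruct (N_spec a c Ha0 Hlc) as [Hnc HGc].
  assert (Hlcl : Rabs (lZ c - l1) < m / (4 * F)) by (apply Hla; apply Rabs_def1; lra).
  apply Rabs_def2 in Hlcl.
  assert (HmD : m / (4 * D) * D = m / 4) by (field; lra).
  assert (HmF : m / (4 * F) * F = m / 4) by (field; lra).
  assert (Hf0 : 0 <= f1 (n1 - e)) by (apply (ro_nonneg f1 f1' g1 D Hf1); lra).
  assert (HfF : f1 (n1 - e) <= F) by (apply (ro_le f1 f1' g1 D Hf1); lra).
  assert (P1 : 0 < Gn a (lZ c) (n1 - e)).
  { unfold Gn in *.
    assert (Rabs (a - mu1) * D <= m/4).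
    { rewrite <- HmD. apply Rmult_le_compat_r. lra. left. apply Rabs_def1; lra. }
    assert (Rabs (lZ c - l1) * f1 (n1 - e) <= m/4).
    { rewrite <- HmF. apply Rle_trans with (Rabs (lZ c - l1) * F).
      apply Rmult_le_compat_l. apply Rabs_pos. auto.
      apply Rmult_le_compat_r. lra. left. apply Rabs_def1; lra. }
    pose proof (Rle_abs (mu1 - a)). rewrite Rabs_minus_sym in H1.
    pose proof (Rle_abs (lZ c - l1)).
    assert ((mu1 - a) * D <= m/4) by nra.
    assert ((lZ c - l1) * f1 (n1 - e) <= m/4) by nra. nra. }
  assert (P2 : Gn a (lZ c) (n1 + e) < 0).
  { unfold Gn in *.
    assert (Rabs (a - mu1) * D <= m/4).
    { rewrite <- HmD. apply Rmult_le_compat_r. lra. left. apply Rabs_def1; lra. }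
    assert (Rabs (lZ c - l1) * F <= m/4).
    { rewrite <- HmF. apply Rmult_le_compat_r. lra. left. apply Rabs_def1; lra. }
    pose proof (Rle_abs (a - mu1)).
    pose proof (Rle_abs (l1 - lZ c)). rewrite Rabs_minus_sym in H2.
    assert ((a - mu1) * D <= m/4) by nra.
    assert ((l1 - lZ c) * F <= m/4) by nra. unfold F in *. nra. }
  assert (n1 - e < Nf a c).
  { destruct (Rle_lt_dec (Nf a c) (n1 - e)); auto.
    pose proof (Gn_decr' a (lZ c) (Nf a c) (n1 - e) Hlc ltac:(lra) r). lra. }
  assert (Nf a c < n1 + e).
  { destruct (Rle_lt_dec (n1 + e) (Nf a c)); auto.
    pose proof (Gn_decr' a (lZ c) (n1 + e) (Nf a c) Hlc ltac:(lra) r). lra. }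
  unfold n1 in *. apply Rabs_def1; lra.
Qed.

Definition K2 (M : nat -> nat -> R) := -(M 0%nat 0%nat + M 1%nat 1%nat + M 2%nat 2%nat).
Definition K1 (M : nat -> nat -> R) := M 0%nat 0%nat * M 1%nat 1%nat - M 0%nat 1%nat * M 1%nat 0%nat
  + M 0%nat 0%nat * M 2%nat 2%nat - M 0%nat 2%nat * M 2%nat 0%nat
  + M 1%nat 1%nat * M 2%nat 2%nat - M 1%nat 2%nat * M 2%nat 1%nat.
Definition K0 (M : nat -> nat -> R) := - det3 M.
Lemma charpoly_cub M x : charpoly M x = cub (K2 M) (K1 M) (K0 M) x.
Proof. unfold charpoly, cub, K2, K1, K0, det3. simpl. ring. Qed.

Definition Ef (al be ga de u v : R) := al + be * u + ga * v + de * (u * v).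

Definition z0 l d2 := g2 / d2 * l.
Definition pp1 l d2 := g1 - f2' l * z0 l d2 * g1.
Definition pp0 l d1 d2 := f2' l * z0 l d2 * d1 - d1.
Definition qq1 l d2 := g2 * f2' l * z0 l d2 * g1.
Definition qq0 l d1 d2 := - (g2 * f2' l * z0 l d2 * d1).
Definition ee l d2 := g2 * f2 l - d2.
Definition mm1 l d2 := pp1 l d2 * ee l d2 + f2 l * qq1 l d2.
Definition mm0 l d1 d2 := pp0 l d1 d2 * ee l d2 + f2 l * qq0 l d1 d2.

Definition A2 l d1 d2 := D - pp0 l d1 d2 - ee l d2.
Definition B2 l d2 := - pp1 l d2.
Definition C2 (l : R) := l.
Definition A1 l d1 d2 := - D * pp0 l d1 d2 + ee l d2 * (pp0 l d1 d2 - D) + f2 l * qq0 l d1 d2.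
Definition B1 l d2 := - D * pp1 l d2 + ee l d2 * pp1 l d2 + f2 l * qq1 l d2.
Definition C1 l d1 d2 := - l * pp0 l d1 d2 - ee l d2 * l.
Definition E1 l d2 := g1 * l - l * pp1 l d2.
Definition A0 l d1 d2 := D * mm0 l d1 d2.
Definition B0 l d2 := D * mm1 l d2.
Definition C0 l d1 d2 := l * mm0 l d1 d2.
Definition E0 l d2 := l * mm1 l d2 - g1 * l * ee l d2.

Definition JJ n l d1 d2 := jac f1 f1' f2 f2' g1 g2 D d1 d2 n l (g2 / d2 * l * (g1 * f1 n - d1)).

Lemma K2E n l d1 d2 : K2 (JJ n l d1 d2) = Ef (A2 l d1 d2) (B2 l d2) (C2 l) 0 (f1 n) (f1' n).
Proof. unfold K2, JJ, jac, Ef, A2, B2, C2, pp0, pp1, ee, z0. simpl. ring. Qed.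
Lemma K1E n l d1 d2 : K1 (JJ n l d1 d2) = Ef (A1 l d1 d2) (B1 l d2) (C1 l d1 d2) (E1 l d2) (f1 n) (f1' n).
Proof. unfold K1, JJ, jac, Ef, A1, B1, C1, E1, pp0, pp1, qq0, qq1, ee, z0. simpl. ring. Qed.
Lemma K0E n l d1 d2 : K0 (JJ n l d1 d2) = Ef (A0 l d1 d2) (B0 l d2) (C0 l d1 d2) (E0 l d2) (f1 n) (f1' n).
Proof. unfold K0, det3, JJ, jac, Ef, A0, B0, C0, E0, mm0, mm1, pp0, pp1, qq0, qq1, ee, z0. simpl. ring. Qed.

Definition dq y y' := if Req_EM_T y y' then f1' y else (f1 y - f1 y') / (y - y').

Lemma dq_cont y0 : forall eps, 0 < eps -> exists d, 0 < d /\ forall y y',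
  Rabs (y - y0) < d -> Rabs (y' - y0) < d -> Rabs (dq y y' - f1' y0) < eps.
Proof.
  intros eps Heps. destruct (cpt_eps f1' y0 (ro_cpt' f1 f1' g1 D Hf1 y0) eps Heps) as [d [Hd Hf]].
  exists d. split. auto. intros y y' Hy Hy'. unfold dq. destruct (Req_EM_T y y') as [E|E].
  - apply Hf. auto.
  - destruct (Rlt_or_le y y') as [Hlt|Hle].
    + destruct (MVT_cor2 f1 f1' y y' Hlt) as [c [Hc1 Hc2]]. intros; apply (ro_der f1 f1' g1 D Hf1).
      replace ((f1 y - f1 y') / (y - y')) with (f1' c) by (apply (Rmult_eq_reg_r (y - y')); [|lra]; field_simplify; lra).
      apply Hf. apply Rabs_def2 in Hy. apply Rabs_def2 in Hy'. apply Rabs_def1; lra.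
    + assert (Hlt : y' < y) by lra.
      destruct (MVT_cor2 f1 f1' y' y Hlt) as [c [Hc1 Hc2]]. intros; apply (ro_der f1 f1' g1 D Hf1).
      replace ((f1 y - f1 y') / (y - y')) with (f1' c) by (apply (Rmult_eq_reg_r (y - y')); [|lra]; field_simplify; lra).
      apply Hf. apply Rabs_def2 in Hy. apply Rabs_def2 in Hy'. apply Rabs_def1; lra.
Qed.

Definition Nd mu d2 := D / (D + lZ d2 * f1' (Nf mu d2)).

Lemma adm_l d2 : 0 < d2 -> Rabs (d2 - D) < eta2 -> 0 < lZ d2.
Proof. intros. apply (Hadm2 d2); auto. Qed.

Lemma N_der mu d2 : 0 < mu -> 0 < d2 -> Rabs (d2 - D) < eta2 ->
  derivable_pt_lim (fun t => Nf t d2) mu (Nd mu d2).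
Proof.
  intros Hmu Hd2 Ha2. pose proof (adm_l d2 Hd2 Ha2) as Hl.
  destruct (N_spec mu d2 Hmu Hl) as [Hn HG].
  pose proof (ro_pos f1 f1' g1 D Hf1 (Nf mu d2) ltac:(lra)) as Hv.
  assert (HQ0 : 0 < D + lZ d2 * f1' (Nf mu d2)) by nra.
  replace (Nd mu d2) with (- D / (- D - lZ d2 * f1' (Nf mu d2))) by (unfold Nd; field; lra).
  apply (ID (fun t => Nf t d2) mu (fun t n => Gn t (lZ d2) n) (fun t y y' => - D - lZ d2 * dq y y')).
  - exists mu. split. auto. intros t Ht. apply Rabs_def2 in Ht. apply (N_spec t d2); auto. lra.
  - intros t y y'. unfold Gn, dq. destruct (Req_EM_T y y') as [E|E]. subst. ring.
    field. lra.
  - unfold Gn. apply is_derive_Reals. auto_derive. auto. ring.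
  - intros eps Heps.
    destruct (dq_cont (Nf mu d2) (eps / lZ d2) ltac:(apply Rdiv_lt_0_compat; lra)) as [d [Hd Hdq]].
    pose proof (proj1 (cont3_eps _ _ _ _) (N_cont mu d2 0 Hmu Hd2 Ha2)) as HN.
    destruct (HN d Hd) as [d' [Hd' HN']].
    exists d'. split. auto. intros t Ht.
    specialize (HN' t 0 d2 Ht ltac:(rewrite Rminus_diag, Rabs_R0; auto) ltac:(rewrite Rminus_diag, Rabs_R0; auto)).
    simpl in HN'.
    specialize (Hdq (Nf t d2) (Nf mu d2) HN' ltac:(rewrite Rminus_diag, Rabs_R0; auto)).
    replace (- D - lZ d2 * dq (Nf t d2) (Nf mu d2) - (- D - lZ d2 * f1' (Nf mu d2)))
      with (- (lZ d2 * (dq (Nf t d2) (Nf mu d2) - f1' (Nf mu d2)))) by ring.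
    rewrite Rabs_Ropp, Rabs_mult, (Rabs_right (lZ d2)) by lra.
    apply Rmult_lt_reg_l with (/ lZ d2). apply Rinv_0_lt_compat; auto.
    rewrite <- Rmult_assoc, Rinv_l, Rmult_1_l by lra. rewrite Rmult_comm. exact Hdq.
  - lra.
Qed.

Definition kf2 (mu d1 d2 : R) := Ef (A2 (lZ d2) d1 d2) (B2 (lZ d2) d2) (C2 (lZ d2)) 0 (f1 (Nf mu d2)) (f1' (Nf mu d2)).
Definition kf1 mu d1 d2 := Ef (A1 (lZ d2) d1 d2) (B1 (lZ d2) d2) (C1 (lZ d2) d1 d2) (E1 (lZ d2) d2) (f1 (Nf mu d2)) (f1' (Nf mu d2)).
Definition kf0 mu d1 d2 := Ef (A0 (lZ d2) d1 d2) (B0 (lZ d2) d2) (C0 (lZ d2) d1 d2) (E0 (lZ d2) d2) (f1 (Nf mu d2)) (f1' (Nf mu d2)).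
Definition Efd be ga de n := be * f1' n + ga * f1'' n + de * (f1' n * f1' n + f1 n * f1'' n).
Definition kd2 (mu d1 d2 : R) := Efd (B2 (lZ d2) d2) (C2 (lZ d2)) 0 (Nf mu d2) * Nd mu d2.
Definition kd1 mu d1 d2 := Efd (B1 (lZ d2) d2) (C1 (lZ d2) d1 d2) (E1 (lZ d2) d2) (Nf mu d2) * Nd mu d2.
Definition kd0 mu d1 d2 := Efd (B0 (lZ d2) d2) (C0 (lZ d2) d1 d2) (E0 (lZ d2) d2) (Nf mu d2) * Nd mu d2.

Lemma charpoly_kf mu d1 d2 x : charpoly (jacE2 f1 f1' f2 f2' g1 g2 D mu d1 d2) x =
  cub (kf2 mu d1 d2) (kf1 mu d1 d2) (kf0 mu d1 d2) x.
Proof. rewrite charpoly_cub. unfold kf2, kf1, kf0. rewrite <- K2E, <- K1E, <- K0E. reflexivity. Qed.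

Lemma Ef_der al be ga de n : derivable_pt_lim (fun n => Ef al be ga de (f1 n) (f1' n)) n (Efd be ga de n).
Proof.
  pose proof (ro_der f1 f1' g1 D Hf1 n) as H1. pose proof (Hf1d n) as H2.
  apply is_derive_Reals in H1. apply is_derive_Reals in H2. apply is_derive_Reals.
  unfold Ef, Efd. auto_derive. repeat split; eexists; eassumption.
  rewrite (Derive_of _ _ _ H1), (Derive_of _ _ _ H2). ring.
Qed.

Lemma kf_der_gen (al be ga de : R) mu d2 : 0 < mu -> 0 < d2 -> Rabs (d2 - D) < eta2 ->
  derivable_pt_lim (fun t => Ef al be ga de (f1 (Nf t d2)) (f1' (Nf t d2))) mu (Efd be ga de (Nf mu d2) * Nd mu d2).
Proof.
  intros. apply (derivable_pt_lim_comp (fun t => Nf t d2) (fun n => Ef al be ga de (f1 n) (f1' n))).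
  apply N_der; auto. apply Ef_der.
Qed.

Lemma kcub_der mu d1 d2 y : 0 < mu -> 0 < d2 -> Rabs (d2 - D) < eta2 ->
  derivable_pt_lim (fun t => cub (kf2 t d1 d2) (kf1 t d1 d2) (kf0 t d1 d2) y) mu
    (kd2 mu d1 d2 * y^2 + kd1 mu d1 d2 * y + kd0 mu d1 d2).
Proof. intros. apply cub_der; apply kf_der_gen; auto. Qed.

Ltac c3fin := repeat match goal with
 | |- cont3 (fun _ _ _ => f1 _) _ _ _ => apply (cont3_comp1 f1)
 | |- cont3 (fun _ _ _ => f1' _) _ _ _ => apply (cont3_comp1 f1')
 | |- cont3 (fun _ _ _ => f1'' _) _ _ _ => apply (cont3_comp1 f1'')
 | |- cont3 (fun _ _ _ => f2 _) _ _ _ => apply (cont3_comp1 f2)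
 | |- cont3 (fun _ _ _ => f2' _) _ _ _ => apply (cont3_comp1 f2')
 | |- cont3 (fun _ _ _ => lZ _) _ _ _ => apply (cont3_comp1 lZ)
 | |- cont3 (fun a _ c => Nf a c) _ _ _ => apply N_cont
 | |- continuity_pt f1 _ => apply (ro_cpt f1 f1' g1 D Hf1)
 | |- continuity_pt f1' _ => apply (ro_cpt' f1 f1' g1 D Hf1)
 | |- continuity_pt f1'' _ => apply Hf1c
 | |- continuity_pt f2 _ => apply (ro_cpt f2 f2' g2 D Hf2)
 | |- continuity_pt f2' _ => apply (ro_cpt' f2 f2' g2 D Hf2)
 | |- continuity_pt lZ _ => apply lZ_cont
 | |- _ => progress c3
 | |- _ => progress cbv beta
 end.

Lemma kf_cont mu1 y d21 : 0 < mu1 -> 0 < d21 -> Rabs (d21 - D) < eta2 ->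
  cont3 kf2 mu1 y d21 /\ cont3 kf1 mu1 y d21 /\ cont3 kf0 mu1 y d21.
Proof.
  intros. unfold kf2, kf1, kf0, Ef, A2, B2, C2, A1, B1, C1, E1, A0, B0, C0, E0, mm0, mm1, pp0, pp1, qq0, qq1, ee, z0.
  repeat split; c3fin; auto; lra.
Qed.

Lemma kd_cont mu1 y d21 : 0 < mu1 -> 0 < d21 -> Rabs (d21 - D) < eta2 ->
  cont3 kd2 mu1 y d21 /\ cont3 kd1 mu1 y d21 /\ cont3 kd0 mu1 y d21.
Proof.
  intros Hmu Hd Ha. pose proof (adm_l d21 Hd Ha) as Hl.
  destruct (N_spec mu1 d21 Hmu Hl) as [Hn HG].
  pose proof (ro_pos f1 f1' g1 D Hf1 (Nf mu1 d21) ltac:(lra)) as Hv.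
  assert (HQ0 : 0 < D + lZ d21 * f1' (Nf mu1 d21)) by nra.
  unfold kd2, kd1, kd0, Efd, Nd, Ef, A2, B2, C2, A1, B1, C1, E1, A0, B0, C0, E0, mm0, mm1, pp0, pp1, qq0, qq1, ee, z0.
  repeat split; c3fin; auto; lra.
Qed.

Lemma base_u muc2 : 0 < muc2 ->
  D / (g2 * lam f2 g2 D) > f2' (lam f2 g2 D) ->
  Afun f1 f1' f2 f2' g1 g2 D muc2 = 0 ->
  f1 (Nf muc2 D) = (D + f1' (Nf muc2 D) * D / (g2 * (D / (g2 * lZ D) - f2' (lZ D)))) / g1.
Proof.
  intros Hmu Hc HA. pose proof (adm_l D HD ltac:(rewrite Rminus_diag, Rabs_R0; auto)) as Hl.
  unfold Afun, Zstar in HA. fold (lZ D) in *. fold (Nf muc2 D) in *.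
  set (l := lZ D) in *. set (n := Nf muc2 D) in *. set (c := D / (g2 * l) - f2' l) in *.
  assert (Hc0 : 0 < c) by (unfold c; lra).
  clearbody c n l.
  assert (E : g1 * f1 n - D = f1' n * D / (g2 * c)).
  { apply Rmult_eq_reg_l with (g2 / D * l * c). 2: apply Rgt_not_eq; unfold Rgt; repeat apply Rmult_lt_0_compat; try apply Rdiv_lt_0_compat; try apply Rinv_0_lt_compat; lra.
    replace (g2 / D * l * c * (g1 * f1 n - D)) with (g2 / D * l * (g1 * f1 n - D) * c) by ring.
    replace (g2 / D * l * c * (f1' n * D / (g2 * c))) with (l * f1' n) by (field; lra). lra. }
  apply (Rmult_eq_reg_l g1). 2: lra. replace (g1 * ((D + f1' n * D / (g2 * c)) / g1)) with (D + f1' n * D / (g2 * c)) by (field; lra).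
  lra.
Qed.

Lemma base_k2 muc2 : 0 < muc2 ->
  D / (g2 * lam f2 g2 D) > f2' (lam f2 g2 D) ->
  Afun f1 f1' f2 f2' g1 g2 D muc2 = 0 ->
  kf2 muc2 D D = D /\ kf1 muc2 D D = (g2 / D * lZ D * (g1 * f1 (Nf muc2 D) - D)) * f2' (lZ D) * (lZ D * f1' (Nf muc2 D) + D).
Proof.
  intros Hmu Hc HA. pose proof (base_u muc2 Hmu Hc HA) as Hu.
  destruct (Hadm2 D HD ltac:(rewrite Rminus_diag, Rabs_R0; auto)) as [Hl Hs]. fold (lZ D) in *.
  fold (lZ D) in Hc.
  assert (Hc0 : 0 < D / (g2 * lZ D) - f2' (lZ D)) by lra.
  unfold kf2, kf1, Ef, A2, B2, C2, A1, B1, C1, E1, pp0, pp1, qq0, qq1, ee, z0.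
  assert (Hc1 : 0 < D - f2' (lZ D) * (g2 * lZ D)).
  { replace (D - f2' (lZ D) * (g2 * lZ D)) with ((g2 * lZ D) * (D / (g2 * lZ D) - f2' (lZ D))) by (field; lra).
    apply Rmult_lt_0_compat; nra. }
  rewrite Hs. rewrite Hu. split; field; repeat split; lra.
Qed.

Lemma charpoly_mD N P Z : charpoly (jac f1 f1' f2 f2' g1 g2 D D D N P Z) (- D) = 0.
Proof.
  assert (H : g1 * g2 * charpoly (jac f1 f1' f2 f2' g1 g2 D D D N P Z) (- D) = 0).
  { unfold charpoly, det3, jac. simpl. ring. }
  apply Rmult_integral in H. destruct H as [H|H]; auto. nra.
Qed.

Lemma cub_mD mu : cub (kf2 mu D D) (kf1 mu D D) (kf0 mu D D) (- D) = 0.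
Proof. rewrite <- charpoly_kf. apply charpoly_mD. Qed.

Lemma base_rel muc2 : 0 < muc2 ->
  kd2 muc2 D D * (- D)^2 + kd1 muc2 D D * (- D) + kd0 muc2 D D = 0.
Proof.
  intros Hmu. pose proof (kcub_der muc2 D D (- D) Hmu HD ltac:(rewrite Rminus_diag, Rabs_R0; auto)) as H1.
  assert (Hf : (fun t => cub (kf2 t D D) (kf1 t D D) (kf0 t D D) (- D)) = fun _ => 0).
  { extensionality t. apply cub_mD. }
  rewrite Hf in H1. pose proof (derivable_pt_lim_const 0 muc2) as H2.
  symmetry. exact (uniqueness_limite _ _ _ _ H2 H1).
Qed.

Lemma base_k1pos muc2 : 0 < muc2 ->
  D / (g2 * lam f2 g2 D) > f2' (lam f2 g2 D) ->
  Afun f1 f1' f2 f2' g1 g2 D muc2 = 0 -> 0 < kf1 muc2 D D.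
Proof.
  intros Hmu Hc HA. destruct (base_k2 muc2 Hmu Hc HA) as [_ E]. rewrite E.
  pose proof (adm_l D HD ltac:(rewrite Rminus_diag, Rabs_R0; auto)) as Hl.
  destruct (N_spec muc2 D Hmu Hl) as [Hn _].
  pose proof (ro_pos f1 f1' g1 D Hf1 (Nf muc2 D) ltac:(lra)) as Hv.
  pose proof (ro_pos f2 f2' g2 D Hf2 (lZ D) ltac:(lra)) as Hph.
  unfold Afun, Zstar in HA. fold (lZ D) (Nf muc2 D) in HA. fold (lZ D) in Hc.
  assert (HZ : 0 < g2 / D * lZ D * (g1 * f1 (Nf muc2 D) - D)).
  { assert (0 < D / (g2 * lZ D) - f2' (lZ D)) by lra.
    assert (0 < lZ D * f1' (Nf muc2 D)) by nra. nra. }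
  apply Rmult_lt_0_compat. apply Rmult_lt_0_compat; auto. nra.
Qed.

Lemma base_kd2 muc2 : 0 < muc2 ->
  D / (g2 * lam f2 g2 D) > f2' (lam f2 g2 D) ->
  f1'' (Nf muc2 D) < 0 -> kd2 muc2 D D < 0.
Proof.
  intros Hmu Hc Hw.
  pose proof (adm_l D HD ltac:(rewrite Rminus_diag, Rabs_R0; auto)) as Hl.
  destruct (N_spec muc2 D Hmu Hl) as [Hn _].
  pose proof (ro_pos f1 f1' g1 D Hf1 (Nf muc2 D) ltac:(lra)) as Hv.
  fold (lZ D) in Hc.
  assert (Hc1 : 0 < D - f2' (lZ D) * (g2 * lZ D)).
  { replace (D - f2' (lZ D) * (g2 * lZ D)) with ((g2 * lZ D) * (D / (g2 * lZ D) - f2' (lZ D))) by (field; lra).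
    apply Rmult_lt_0_compat; nra. }
  assert (HNd : 0 < Nd muc2 D).
  { unfold Nd. apply Rdiv_lt_0_compat. auto. nra. }
  unfold kd2, Efd, B2, C2, pp1, z0.
  assert (E : - (g1 - f2' (lZ D) * (g2 / D * lZ D) * g1) = - (g1 / D) * (D - f2' (lZ D) * (g2 * lZ D))) by (field; lra).
  rewrite E.
  assert (0 < g1 / D) by (apply Rdiv_lt_0_compat; lra).
  assert (0 < g1 / D * (D - f2' (lZ D) * (g2 * lZ D))) by (apply Rmult_lt_0_compat; auto).
  assert (lZ D * f1'' (Nf muc2 D) < 0) by nra.
  assert (- (g1 / D) * (D - f2' (lZ D) * (g2 * lZ D)) * f1' (Nf muc2 D) < 0) by nra.
  nra.
Qed.

Definition InBox (muc2 e mu d1 d2 : R) := Rabs (mu - muc2) < e /\ Rabs (d1 - D) < e /\ Rabs (d2 - D) < e.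

Definition Good (muc2 eps kap mu d1 d2 : R) :=
  0 < mu /\ 0 < d2 /\ Rabs (d2 - D) < eta2 /\ mu > mu_c1 f1 f2 g1 g2 D d1 d2 /\
  (exists r, - D - eps <= r <= - D + eps /\ cub (kf2 mu d1 d2) (kf1 mu d1 d2) (kf0 mu d1 d2) r = 0) /\
  (forall x y, - D - eps <= x <= - D + eps -> - D - eps <= y <= - D + eps ->
        kap <= Qf (kf2 mu d1 d2) (kf1 mu d1 d2) x y) /\
  (forall x, - D - eps <= x <= - D + eps -> x < 0 /\ 0 < disc (kf2 mu d1 d2) (kf1 mu d1 d2) x).

Lemma core muc2 : 0 < muc2 ->
  D / (g2 * lam f2 g2 D) > f2' (lam f2 g2 D) ->
  Afun f1 f1' f2 f2' g1 g2 D muc2 = 0 ->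
  muc2 > mu_c1 f1 f2 g1 g2 D D D ->
  continuity_pt (lam f1 g1) D ->
  exists e eps kap, 0 < e /\ 0 < eps /\ 0 < kap /\
    forall mu d1 d2, InBox muc2 e mu d1 d2 -> Good muc2 eps kap mu d1 d2.
Proof.
  intros Hmu Hc HA Hmc Hl1.
  assert (HaD : Rabs (D - D) < eta2) by (rewrite Rminus_diag, Rabs_R0; auto).
  destruct (kf_cont muc2 D D Hmu HD HaD) as [C2c [C1c C0c]].
  destruct (base_k2 muc2 Hmu Hc HA) as [Ek2 _].
  pose proof (base_k1pos muc2 Hmu Hc HA) as Hk1.
  destruct (GC (fun p : R*R*R => kf2 (fst (fst p)) (snd (fst p)) (snd p))
               (fun p : R*R*R => kf1 (fst (fst p)) (snd (fst p)) (snd p))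
               (fun p : R*R*R => kf0 (fst (fst p)) (snd (fst p)) (snd p)) ((muc2, D), D) (- D)
               C2c C1c C0c) as [eps [kap [Heps [Hkap Hloc]]]].
  { simpl. apply cub_mD. }
  { simpl. rewrite Ek2. unfold Qf. nra. }
  { simpl. rewrite Ek2. unfold disc. nra. }
  { lra. }
  destruct (locally_box _ _ Hloc) as [e1 [He1 Hb1]].
  assert (Cmc : cont3 (fun mu d1 d2 => mu - mu_c1 f1 f2 g1 g2 D d1 d2) muc2 D D).
  { unfold mu_c1. c3.
    apply (cont3_comp1 (lam f1 g1)). apply cont3_p2. exact Hl1.
    apply (cont3_comp1 (lam f2 g2)). apply cont3_p3. apply lZ_cont; auto.
    cbv beta. nra. }
  destruct (proj1 (cont3_eps _ _ _ _) Cmc (muc2 - mu_c1 f1 f2 g1 g2 D D D) ltac:(lra)) as [e2 [He2 Hb2]].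
  set (e := Rmin (Rmin e1 e2) (Rmin (muc2/2) (Rmin (eta2/2) (D/2)))).
  assert (He : 0 < e) by (unfold e; repeat apply Rmin_pos; lra).
  assert (L1 : e <= e1) by (unfold e; eapply Rle_trans; apply Rmin_l).
  assert (L2 : e <= e2) by (unfold e; eapply Rle_trans; [apply Rmin_l|apply Rmin_r]).
  assert (L3 : e <= muc2/2) by (unfold e; eapply Rle_trans; [apply Rmin_r|apply Rmin_l]).
  assert (L4 : e <= eta2/2) by (unfold e; eapply Rle_trans; [apply Rmin_r|eapply Rle_trans; [apply Rmin_r|apply Rmin_l]]).
  assert (L5 : e <= D/2) by (unfold e; eapply Rle_trans; [apply Rmin_r|eapply Rle_trans; [apply Rmin_r|apply Rmin_r]]).
  clearbody e.
  exists e, eps, kap. split. auto. split. auto. split. auto.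
  intros mu d1 d2 [Hm [Hd1 Hd2]].
  specialize (Hb1 ((mu, d1), d2) ltac:(apply ball3; repeat split; lra)). simpl in Hb1.
  destruct Hb1 as [B1 [B2 B3]].
  specialize (Hb2 mu d1 d2 ltac:(lra) ltac:(lra) ltac:(lra)).
  apply Rabs_def2 in Hm. apply Rabs_def2 in Hd2. apply Rabs_def2 in Hb2.
  unfold Good. repeat split; try lra; auto.
  all: try (apply Rabs_def1; lra). all: apply B3; auto.
Qed.

Definition Rt eps mu d1 d2 := epsilon (inhabits 0) (fun r => - D - eps <= r <= - D + eps /\
  cub (kf2 mu d1 d2) (kf1 mu d1 d2) (kf0 mu d1 d2) r = 0).

Lemma Rt_spec muc2 eps kap mu d1 d2 : Good muc2 eps kap mu d1 d2 ->
  (- D - eps <= Rt eps mu d1 d2 <= - D + eps) /\ cub (kf2 mu d1 d2) (kf1 mu d1 d2) (kf0 mu d1 d2) (Rt eps mu d1 d2) = 0.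
Proof. intros [_ [_ [_ [_ [Hex _]]]]]. exact (epsilon_spec (inhabits 0) _ Hex). Qed.

Lemma Rt_uniq muc2 eps kap mu d1 d2 x : 0 < kap -> Good muc2 eps kap mu d1 d2 ->
  - D - eps <= x <= - D + eps -> cub (kf2 mu d1 d2) (kf1 mu d1 d2) (kf0 mu d1 d2) x = 0 ->
  x = Rt eps mu d1 d2.
Proof.
  intros Hk HG Hx Hc. destruct (Rt_spec _ _ _ _ _ _ HG) as [Hr1 Hr2].
  pose proof (cub_diff (kf2 mu d1 d2) (kf1 mu d1 d2) (kf0 mu d1 d2) x (Rt eps mu d1 d2)) as E.
  rewrite Hr2, Hc in E. destruct HG as [_ [_ [_ [_ [_ [HQ _]]]]]].
  pose proof (HQ x (Rt eps mu d1 d2) Hx Hr1).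
  destruct (Req_dec x (Rt eps mu d1 d2)); auto.
  assert (Rt eps mu d1 d2 - x <> 0) by lra.
  assert ((Rt eps mu d1 d2 - x) * Qf (kf2 mu d1 d2) (kf1 mu d1 d2) x (Rt eps mu d1 d2) <> 0)
    by (apply Rmult_integral_contrapositive; split; lra).
  lra.
Qed.

Lemma box_open muc2 e mu d1 d2 : InBox muc2 e mu d1 d2 -> exists d, 0 < d /\
  forall a b c, Rabs (a - mu) < d -> Rabs (b - d1) < d -> Rabs (c - d2) < d -> InBox muc2 e a b c.
Proof.
  intros [H1 [H2 H3]].
  exists (Rmin (e - Rabs (mu - muc2)) (Rmin (e - Rabs (d1 - D)) (e - Rabs (d2 - D)))).
  split. repeat apply Rmin_pos; lra.
  intros a b c Ha Hb Hc.
  assert (A1 : Rabs (a - mu) < e - Rabs (mu - muc2)) by (eapply Rlt_le_trans; [exact Ha|apply Rmin_l]).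
  assert (A2 : Rabs (b - d1) < e - Rabs (d1 - D)) by (eapply Rlt_le_trans; [exact Hb|eapply Rle_trans; [apply Rmin_r|apply Rmin_l]]).
  assert (A3 : Rabs (c - d2) < e - Rabs (d2 - D)) by (eapply Rlt_le_trans; [exact Hc|eapply Rle_trans; [apply Rmin_r|apply Rmin_r]]).
  pose proof (Rabs_triang (a - mu) (mu - muc2)). pose proof (Rabs_triang (b - d1) (d1 - D)).
  pose proof (Rabs_triang (c - d2) (d2 - D)).
  replace (a - mu + (mu - muc2)) with (a - muc2) in H by ring.
  replace (b - d1 + (d1 - D)) with (b - D) in H0 by ring.
  replace (c - d2 + (d2 - D)) with (c - D) in H4 by ring.
  unfold InBox. repeat split; lra.
Qed.

Definition af eps mu d1 d2 := - (kf2 mu d1 d2 + Rt eps mu d1 d2) / 2.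
Definition wf eps mu d1 d2 := sqrt (disc (kf2 mu d1 d2) (kf1 mu d1 d2) (Rt eps mu d1 d2) / 4).
Definition rd eps mu d1 d2 := - (kd2 mu d1 d2 * Rt eps mu d1 d2 ^ 2 + kd1 mu d1 d2 * Rt eps mu d1 d2 + kd0 mu d1 d2)
   / Qf (kf2 mu d1 d2) (kf1 mu d1 d2) (Rt eps mu d1 d2) (Rt eps mu d1 d2).
Definition ad eps mu d1 d2 := - (kd2 mu d1 d2 + rd eps mu d1 d2) / 2.

Section Box.
Variables (muc2 e eps kap : R).
Hypotheses (He : 0 < e) (Heps : 0 < eps) (Hkap : 0 < kap)
  (HB : forall mu d1 d2, InBox muc2 e mu d1 d2 -> Good muc2 eps kap mu d1 d2).

Lemma Good_adm mu d1 d2 : Good muc2 eps kap mu d1 d2 -> 0 < mu /\ 0 < d2 /\ Rabs (d2 - D) < eta2.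
Proof. intros [H1 [H2 [H3 _]]]. auto. Qed.

Lemma Rt_cont mu1 y1 z1 : InBox muc2 e mu1 y1 z1 -> cont3 (Rt eps) mu1 y1 z1.
Proof.
  intros Hb. pose proof (HB _ _ _ Hb) as HG1. destruct (Good_adm _ _ _ HG1) as [Hm1 [Hz1 Ha1]].
  destruct (kf_cont mu1 y1 z1 Hm1 Hz1 Ha1) as [C2 [C1 C0]].
  set (r1 := Rt eps mu1 y1 z1).
  assert (CF : cont3 (fun a b c => cub (kf2 a b c) (kf1 a b c) (kf0 a b c) r1) mu1 y1 z1).
  { unfold cub. c3; auto. }
  apply cont3_eps. intros eps' Heps'.
  destruct (proj1 (cont3_eps _ _ _ _) CF (eps' * kap) ltac:(nra)) as [d1 [Hd1 Hf]].
  destruct (box_open _ _ _ _ _ Hb) as [d2 [Hd2 Ho]].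
  exists (Rmin d1 d2). split. apply Rmin_pos; auto. intros a b c Ha Hb' Hc.
  assert (Hin : InBox muc2 e a b c).
  { apply Ho; eapply Rlt_le_trans; eauto; apply Rmin_r. }
  pose proof (HB _ _ _ Hin) as HG.
  specialize (Hf a b c ltac:(eapply Rlt_le_trans; eauto; apply Rmin_l)
     ltac:(eapply Rlt_le_trans; eauto; apply Rmin_l) ltac:(eapply Rlt_le_trans; eauto; apply Rmin_l)).
  destruct (Rt_spec _ _ _ _ _ _ HG1) as [Hs1 Hs2]. fold r1 in Hs1, Hs2. rewrite Hs2, Rminus_0_r in Hf.
  destruct (Rt_spec _ _ _ _ _ _ HG) as [Hs3 Hs4].
  pose proof (cub_diff (kf2 a b c) (kf1 a b c) (kf0 a b c) r1 (Rt eps a b c)) as E.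
  rewrite Hs4 in E.
  destruct HG as [_ [_ [_ [_ [_ [HQ _]]]]]].
  pose proof (HQ r1 (Rt eps a b c) Hs1 Hs3) as HQ'.
  assert (Rabs (Rt eps a b c - r1) * kap <= Rabs (Rt eps a b c - r1) * Qf (kf2 a b c) (kf1 a b c) r1 (Rt eps a b c))
    by (apply Rmult_le_compat_l; [apply Rabs_pos|auto]).
  rewrite <- (Rabs_right (Qf (kf2 a b c) (kf1 a b c) r1 (Rt eps a b c))) in H by lra.
  rewrite <- Rabs_mult, <- E, Rminus_0_l, Rabs_Ropp in H.
  apply Rmult_lt_reg_r with kap. auto. unfold r1 in *. lra.
Qed.

Lemma Rt_der mu d1 d2 : InBox muc2 e mu d1 d2 ->
  derivable_pt_lim (fun t => Rt eps t d1 d2) mu (rd eps mu d1 d2).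
Proof.
  intros Hb. pose proof (HB _ _ _ Hb) as HG. destruct (Good_adm _ _ _ HG) as [Hm [Hz Ha]].
  destruct (kf_cont mu d1 d2 Hm Hz Ha) as [C2 [C1 C0]].
  pose proof (Rt_cont mu d1 d2 Hb) as CR.
  unfold rd.
  apply (ID (fun t => Rt eps t d1 d2) mu (fun t y => cub (kf2 t d1 d2) (kf1 t d1 d2) (kf0 t d1 d2) y)
     (fun t y y' => Qf (kf2 t d1 d2) (kf1 t d1 d2) y' y)
     (kd2 mu d1 d2 * Rt eps mu d1 d2 ^ 2 + kd1 mu d1 d2 * Rt eps mu d1 d2 + kd0 mu d1 d2)
     (Qf (kf2 mu d1 d2) (kf1 mu d1 d2) (Rt eps mu d1 d2) (Rt eps mu d1 d2))).
  - destruct (box_open _ _ _ _ _ Hb) as [d [Hd Ho]]. exists d. split. auto. intros t Ht.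
    apply (Rt_spec muc2 eps kap). apply HB. apply Ho; auto; rewrite Rminus_diag, Rabs_R0; auto.
  - intros t y y'. apply cub_diff.
  - apply kcub_der; auto.
  - assert (CQ : cont3 (fun a b c => Qf (kf2 a b c) (kf1 a b c) (Rt eps mu d1 d2) (Rt eps a b c)) mu d1 d2).
    { unfold Qf. c3; auto. }
    intros eps' Heps'. destruct (proj1 (cont3_eps _ _ _ _) CQ eps' Heps') as [d [Hd Hq]].
    exists d. split. auto. intros t Ht. apply (Hq t d1 d2 Ht); rewrite Rminus_diag, Rabs_R0; auto.
  - destruct HG as [_ [_ [_ [_ [_ [HQ _]]]]]]. destruct (Rt_spec _ _ _ _ _ _ (HB _ _ _ Hb)) as [Hs _].
    pose proof (HQ _ _ Hs Hs). lra.
Qed.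

Lemma af_der mu d1 d2 : InBox muc2 e mu d1 d2 ->
  derivable_pt_lim (fun t => af eps t d1 d2) mu (ad eps mu d1 d2).
Proof.
  intros Hb. pose proof (HB _ _ _ Hb) as HG. destruct (Good_adm _ _ _ HG) as [Hm [Hz Ha]].
  pose proof (Rt_der mu d1 d2 Hb) as H1.
  assert (H2 : derivable_pt_lim (fun t => kf2 t d1 d2) mu (kd2 mu d1 d2)) by (apply kf_der_gen; auto).
  apply is_derive_Reals in H1. apply is_derive_Reals in H2. apply is_derive_Reals.
  unfold af, ad. auto_derive. repeat split; eexists; eassumption.
  rewrite (Derive_of _ _ _ H1), (Derive_of _ _ _ H2). field.
Qed.

Lemma ad_cont mu d1 d2 : InBox muc2 e mu d1 d2 -> cont3 (ad eps) mu d1 d2.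
Proof.
  intros Hb. pose proof (HB _ _ _ Hb) as HG. destruct (Good_adm _ _ _ HG) as [Hm [Hz Ha]].
  destruct (kf_cont mu d1 d2 Hm Hz Ha) as [C2 [C1 C0]].
  destruct (kd_cont mu d1 d2 Hm Hz Ha) as [E2 [E1 E0]].
  pose proof (Rt_cont mu d1 d2 Hb) as CR.
  assert (HQ : 0 < Qf (kf2 mu d1 d2) (kf1 mu d1 d2) (Rt eps mu d1 d2) (Rt eps mu d1 d2)).
  { destruct HG as [_ [_ [_ [_ [_ [HQ _]]]]]]. destruct (Rt_spec _ _ _ _ _ _ (HB _ _ _ Hb)) as [Hs _].
    pose proof (HQ _ _ Hs Hs). lra. }
  assert (CQf : cont3 (fun a b c => Qf (kf2 a b c) (kf1 a b c) (Rt eps a b c) (Rt eps a b c)) mu d1 d2)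
    by (unfold Qf; c3; auto).
  unfold ad, rd. c3; auto.
  all: cbv beta; lra.
Qed.

Lemma af_cont mu d1 d2 : InBox muc2 e mu d1 d2 -> cont3 (af eps) mu d1 d2.
Proof.
  intros Hb. pose proof (HB _ _ _ Hb) as HG. destruct (Good_adm _ _ _ HG) as [Hm [Hz Ha]].
  destruct (kf_cont mu d1 d2 Hm Hz Ha) as [C2 [C1 C0]].
  pose proof (Rt_cont mu d1 d2 Hb) as CR.
  unfold af. c3; auto.
Qed.

End Box.

Lemma final muc2 : 0 < muc2 ->
  D / (g2 * lam f2 g2 D) > f2' (lam f2 g2 D) ->
  muc2 > mu_c1 f1 f2 g1 g2 D D D ->
  Afun f1 f1' f2 f2' g1 g2 D muc2 = 0 ->
  continuity_pt (lam f1 g1) D ->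
  (exists delta rho, 0 < delta /\ 0 < rho /\
     forall D1 D2, 0 < D1 -> 0 < D2 ->
       sqrt ((D1 - D) ^ 2 + (D2 - D) ^ 2) < rho ->
       exists r a w : R -> R,
         prop1 f1 f1' f2 f2' g1 g2 D D1 D2 muc2 delta r a w)
  /\
  (f1'' (Nstar f1 f2 g2 D muc2 D) < 0 ->
   exists delta rho, 0 < delta /\ 0 < rho /\
     forall D1 D2, 0 < D1 -> 0 < D2 ->
       sqrt ((D1 - D) ^ 2 + (D2 - D) ^ 2) < rho ->
       exists (r a w a' : R -> R),
         prop1 f1 f1' f2 f2' g1 g2 D D1 D2 muc2 delta r a w /\
         (forall mu, muc2 - delta <= mu <= muc2 + delta ->
            derivable_pt_lim a mu (a' mu) /\ a' mu > 0) /\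
         exists mustar, muc2 - delta < mustar < muc2 + delta /\
           a mustar = 0 /\ w mustar <> 0 /\ r mustar < 0 /\ a' mustar > 0).
Proof.
  intros Hmu Hc Hmc HA Hl1.
  destruct (core muc2 Hmu Hc HA Hmc Hl1) as [e [eps [kap [He [Heps [Hkap HB]]]]]].
  assert (P1 : forall delta D1 D2, delta < e -> Rabs (D1 - D) < e -> Rabs (D2 - D) < e ->
     prop1 f1 f1' f2 f2' g1 g2 D D1 D2 muc2 delta (fun mu => Rt eps mu D1 D2)
        (fun mu => af eps mu D1 D2) (fun mu => wf eps mu D1 D2)).
  { intros delta D1 D2 Hde H1 H2 mu Hm.
    assert (Hb : InBox muc2 e mu D1 D2) by (repeat split; auto; apply Rabs_def1; lra).
    pose proof (HB _ _ _ Hb) as HG. destruct (Rt_spec _ _ _ _ _ _ HG) as [Hs1 Hs2].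
    destruct HG as [_ [_ [_ [Hmc' [_ [_ Hx]]]]]]. destruct (Hx _ Hs1) as [Hneg Hdisc].
    split. auto. split.
    - intro x. rewrite charpoly_kf. unfold af, wf. apply cub_factor; auto. lra.
    - split. auto. unfold wf. apply Rgt_not_eq. apply sqrt_lt_R0. lra. }
  split.
  - exists (e/2), (e/2). split. lra. split. lra.
    intros D1 D2 HD1 HD2 Hs. apply sqrt_bound in Hs. destruct Hs as [Hs1 Hs2].
    exists (fun mu => Rt eps mu D1 D2), (fun mu => af eps mu D1 D2), (fun mu => wf eps mu D1 D2).
    apply P1; lra.
  - intros Hw.
    assert (HaD : Rabs (D - D) < eta2) by (rewrite Rminus_diag, Rabs_R0; auto).
    assert (Hb0 : InBox muc2 e muc2 D D) by (unfold InBox; rewrite !Rminus_diag, !Rabs_R0; auto).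
    pose proof (HB _ _ _ Hb0) as HG0.
    assert (HR0 : Rt eps muc2 D D = - D).
    { symmetry. apply (Rt_uniq muc2 eps kap); auto. lra. apply cub_mD. }
    destruct (base_k2 muc2 Hmu Hc HA) as [Ek2 _].
    assert (Hz0 : af eps muc2 D D = 0) by (unfold af; rewrite HR0, Ek2; field).
    assert (Had0 : 0 < ad eps muc2 D D).
    { unfold ad, rd. rewrite HR0. rewrite (base_rel muc2 Hmu).
      pose proof (base_kd2 muc2 Hmu Hc Hw).
      replace (- 0 / Qf (kf2 muc2 D D) (kf1 muc2 D D) (- D) (- D)) with 0 by (unfold Rdiv; ring).
      lra. }
    assert (Cad : cont3 (ad eps) muc2 D D) by (eapply (ad_cont muc2 e eps kap); eassumption).
    destruct (proj1 (cont3_eps _ _ _ _) Cad (ad eps muc2 D D / 2) ltac:(lra)) as [e3 [He3 Hb3]].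
    set (E := Rmin e e3).
    assert (HE : 0 < E) by (unfold E; apply Rmin_pos; auto).
    assert (HEe : E <= e) by apply Rmin_l. assert (HE3 : E <= e3) by apply Rmin_r.
    clearbody E.
    assert (Apos : forall mu d1 d2, InBox muc2 E mu d1 d2 -> 0 < ad eps mu d1 d2).
    { intros mu d1 d2 [H1 [H2 H3]].
      specialize (Hb3 mu d1 d2 ltac:(lra) ltac:(lra) ltac:(lra)). apply Rabs_def2 in Hb3. lra. }
    assert (BoxE : forall mu d1 d2, InBox muc2 E mu d1 d2 -> InBox muc2 e mu d1 d2).
    { intros mu d1 d2 [H1 [H2 H3]]. repeat split; lra. }
    set (lo := muc2 - E/4). set (hi := muc2 + E/4).
    assert (Hlo : af eps lo D D < 0).
    { destruct (MVT_cor2 (fun t => af eps t D D) (fun t => ad eps t D D) lo muc2) as [c [Hc1 Hc2]].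
      unfold lo; lra.
      intros c Hc'. eapply (af_der muc2 e eps kap); try eassumption. apply BoxE.
      unfold InBox. rewrite Rminus_diag, Rabs_R0. repeat split; try lra. apply Rabs_def1; unfold lo in *; lra.
      assert (0 < ad eps c D D).
      { apply Apos. unfold InBox. rewrite Rminus_diag, Rabs_R0. repeat split; try lra. apply Rabs_def1; unfold lo in *; lra. }
      assert (0 < ad eps c D D * (muc2 - lo)) by (apply Rmult_lt_0_compat; unfold lo; lra).
      lra. }
    assert (Hhi : 0 < af eps hi D D).
    { destruct (MVT_cor2 (fun t => af eps t D D) (fun t => ad eps t D D) muc2 hi) as [c [Hc1 Hc2]].
      unfold hi; lra.
      intros c Hc'. eapply (af_der muc2 e eps kap); try eassumption. apply BoxE.
      unfold InBox. rewrite Rminus_diag, Rabs_R0. repeat split; try lra. apply Rabs_def1; unfold hi in *; lra.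
      assert (0 < ad eps c D D).
      { apply Apos. unfold InBox. rewrite Rminus_diag, Rabs_R0. repeat split; try lra. apply Rabs_def1; unfold hi in *; lra. }
      assert (0 < ad eps c D D * (hi - muc2)) by (apply Rmult_lt_0_compat; unfold hi; lra).
      lra. }
    assert (Hblo : InBox muc2 e lo D D).
    { unfold InBox. rewrite Rminus_diag, Rabs_R0. repeat split; try lra. apply Rabs_def1; unfold lo; lra. }
    assert (Hbhi : InBox muc2 e hi D D).
    { unfold InBox. rewrite Rminus_diag, Rabs_R0. repeat split; try lra. apply Rabs_def1; unfold hi; lra. }
    destruct (proj1 (cont3_eps _ _ _ _) (ltac:(eapply (af_cont muc2 e eps kap); eassumption) : cont3 (af eps) lo D D)
      (- af eps lo D D) ltac:(lra)) as [rl [Hrl Hfl]].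
    destruct (proj1 (cont3_eps _ _ _ _) (ltac:(eapply (af_cont muc2 e eps kap); eassumption) : cont3 (af eps) hi D D)
      (af eps hi D D) ltac:(lra)) as [rh [Hrh Hfh]].
    exists (E/2), (Rmin (E/2) (Rmin rl rh)).
    split. lra. split. repeat apply Rmin_pos; lra.
    intros D1 D2 HD1 HD2 Hs. apply sqrt_bound in Hs. destruct Hs as [Hs1 Hs2].
    assert (R1 : Rmin (E/2) (Rmin rl rh) <= E/2) by apply Rmin_l.
    assert (R2 : Rmin (E/2) (Rmin rl rh) <= rl) by (eapply Rle_trans; [apply Rmin_r|apply Rmin_l]).
    assert (R3 : Rmin (E/2) (Rmin rl rh) <= rh) by (eapply Rle_trans; [apply Rmin_r|apply Rmin_r]).
    assert (PP : prop1 f1 f1' f2 f2' g1 g2 D D1 D2 muc2 (E/2) (fun mu => Rt eps mu D1 D2)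
        (fun mu => af eps mu D1 D2) (fun mu => wf eps mu D1 D2)) by (apply P1; lra).
    assert (Der : forall mu, muc2 - E/2 <= mu <= muc2 + E/2 ->
       derivable_pt_lim (fun t => af eps t D1 D2) mu (ad eps mu D1 D2) /\ ad eps mu D1 D2 > 0).
    { intros mu Hm. assert (HbE : InBox muc2 E mu D1 D2) by (repeat split; try lra; apply Rabs_def1; lra).
      split. eapply (af_der muc2 e eps kap); try eassumption. apply BoxE; auto. apply Apos; auto. }
    exists (fun mu => Rt eps mu D1 D2), (fun mu => af eps mu D1 D2), (fun mu => wf eps mu D1 D2),
      (fun mu => ad eps mu D1 D2).
    split. exact PP. split. exact Der.
    assert (Alo : af eps lo D1 D2 < 0).
    { specialize (Hfl lo D1 D2 ltac:(rewrite Rminus_diag, Rabs_R0; lra) ltac:(lra) ltac:(lra)).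
      apply Rabs_def2 in Hfl. lra. }
    assert (Ahi : 0 < af eps hi D1 D2).
    { specialize (Hfh hi D1 D2 ltac:(rewrite Rminus_diag, Rabs_R0; lra) ltac:(lra) ltac:(lra)).
      apply Rabs_def2 in Hfh. lra. }
    assert (Hlh : lo <= hi) by (unfold lo, hi; lra).
    destruct (IVT_cor (fun t => af eps (clamp lo hi t) D1 D2) lo hi) as [z [Hz1 Hz2]].
    { intro t. apply (continuity_pt_comp (clamp lo hi) (fun s => af eps s D1 D2)).
      apply clamp_cont; auto.
      pose proof (clamp_in lo hi t Hlh).
      apply (lim_cont _ _ (ad eps (clamp lo hi t) D1 D2)).
      apply Der. unfold lo, hi in *. lra. }
    { auto. }
    { rewrite !clamp_id by lra. nra. }
    rewrite clamp_id in Hz2 by auto.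
    assert (Hzr : muc2 - E / 2 <= z <= muc2 + E / 2) by (unfold lo, hi in *; lra).
    exists z. split. unfold lo, hi in *; lra.
    destruct (PP z Hzr) as [_ [_ [Hr Hwz]]].
    destruct (Der z Hzr) as [_ Hpos].
    repeat split; auto.
Qed.

End Model.

Theorem theorem3p8
  (D g1 g2 : R) (f1 f1' f1'' f1''' f2 f2' f2'' : R -> R) (muc2 : R)
  (HD : 0 < D) (Hg1 : 0 < g1) (Hg2 : 0 < g2)
  (Hf1 : response_ok f1 f1' g1 D) (Hf2 : response_ok f2 f2' g2 D)
  (Hf1C3 : (forall x, derivable_pt_lim f1' x (f1'' x)) /\
           (forall x, derivable_pt_lim f1'' x (f1''' x)) /\ continuity f1''')
  (Hf2C2 : (forall x, derivable_pt_lim f2' x (f2'' x)) /\ continuity f2'')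
  (Hcond : D / (g2 * lam f2 g2 D) > f2' (lam f2 g2 D))
  (Hmuc2 : muc2 > mu_c1 f1 f2 g1 g2 D D D)
  (HA : Afun f1 f1' f2 f2' g1 g2 D muc2 = 0) :
  (exists delta rho, 0 < delta /\ 0 < rho /\
     forall D1 D2, 0 < D1 -> 0 < D2 ->
       sqrt ((D1 - D) ^ 2 + (D2 - D) ^ 2) < rho ->
       exists r a w : R -> R,
         prop1 f1 f1' f2 f2' g1 g2 D D1 D2 muc2 delta r a w)
  /\
  (f1'' (Nstar f1 f2 g2 D muc2 D) < 0 ->
   exists delta rho, 0 < delta /\ 0 < rho /\
     forall D1 D2, 0 < D1 -> 0 < D2 ->
       sqrt ((D1 - D) ^ 2 + (D2 - D) ^ 2) < rho ->
       exists (r a w a' : R -> R),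
         prop1 f1 f1' f2 f2' g1 g2 D D1 D2 muc2 delta r a w /\
         (forall mu, muc2 - delta <= mu <= muc2 + delta ->
            derivable_pt_lim a mu (a' mu) /\ a' mu > 0) /\
         exists mustar, muc2 - delta < mustar < muc2 + delta /\
           a mustar = 0 /\ w mustar <> 0 /\ r mustar < 0 /\ a' mustar > 0).
Proof.
  destruct Hf1C3 as [Hd1 [Hd2 Hc3]].
  assert (Hf1c : continuity f1'') by (intro x; exact (lim_cont _ _ _ (Hd2 x))).
  destruct (ro_adm f2 f2' g2 D Hf2 Hg2) as [eta2 [Heta2 Hadm2]].
  destruct (ro_adm f1 f1' g1 D Hf1 Hg1) as [eta1 [Heta1 Hadm1]].
  assert (HaD1 : Rabs (D - D) < eta1) by (rewrite Rminus_diag, Rabs_R0; auto).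
  assert (HaD2 : Rabs (D - D) < eta2) by (rewrite Rminus_diag, Rabs_R0; auto).
  pose proof (lam_cont f1 f1' g1 D Hf1 Hg1 eta1 Hadm1 D HD HaD1) as Hl1.
  destruct (Hadm1 D HD HaD1) as [Hp1 _]. destruct (Hadm2 D HD HaD2) as [Hp2 _].
  assert (Hmu : 0 < muc2).
  { unfold mu_c1 in Hmuc2.
    assert (0 < D * lam f2 g2 D / (D * g1)) by (apply Rdiv_lt_0_compat; nra).
    lra. }
  exact (final D g1 g2 f1 f1' f1'' f2 f2' HD Hg1 Hg2 Hf1 Hf2 Hd1 Hf1c eta2 Heta2 Hadm2 muc2 Hmu Hcond Hmuc2 HA Hl1).
Qed.
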